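(* Every group in the class $\mathcal{C}$ contains no nonabelian free subgroup.
   Context: Let $\mathcal{P}$ be the group (under composition) of piecewise linear orientation preserving self-homeomorphisms of $[0,1]$. Let $\mathrm{NS}$ be the class of groups containing no nonabelian free subsemigroup. $\mathcal{C}$ is the smallest class of groups containing all $\mathrm{NS}$-groups and the group $\mathcal{P}$, and closed under taking subgroups, homomorphic images, group extensions and directed unions. *)

(* Defs.v *)
From Stdlib Require Import Reals List.
Open Scope R_scope.
Import ListNotations.

Record Grp : Type := {
  carrier :> Type;
  gmul : carrier -> carrier -> carrier;
  gone : carrier;
  ginv : carrier -> carrier;
  gmulA : forall x y z, gmul x (gmul y z) = gmul (gmul x y) z;
  gmul1 : forall x, gmul gone x = x;
  gmulV : forall x, gmul (ginv x) x = gone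
}.

(* Group homomorphisms (preservation of the product suffices). *)
Definition is_hom (G H : Grp) (f : G -> H) : Prop :=
  forall x y, f (gmul G x y) = gmul H (f x) (f y).

(* Letters: (true = a, false = b) paired with an exponent sign
   (true = +1, false = -1). *)
Definition gletter (G : Grp) (a b : G) (l : bool * bool) : G :=
  let x := if fst l then a else b in
  if snd l then x else ginv G x.

Fixpoint geval (G : Grp) (a b : G) (w : list (bool * bool)) : G :=
  match w with
  | [] => gone G
  | l :: w' => gmul G (gletter G a b l) (geval G a b w')
  end.

Fixpoint reduced (w : list (bool * bool)) : Prop :=
  match w with
  | [] => True
  | l :: w' =>
      match w' with
      | [] => True
      | l' :: _ => ~ (fst l = fst l' /\ snd l <> snd l') /\ reduced w'
      end
  end.

Definition free_pair (G : Grp) (a b : G) : Prop :=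
  forall w, w <> [] -> reduced w -> geval G a b w <> gone G.

(* G contains a nonabelian free subgroup (equivalently, one of rank 2). *)
Definition has_nonab_free_subgroup (G : Grp) : Prop :=
  exists a b : G, free_pair G a b.

Fixpoint peval (G : Grp) (a b : G) (w : list bool) : G :=
  match w with
  | [] => gone G
  | l :: w' => gmul G (if l then a else b) (peval G a b w')
  end.

Definition free_semigroup_pair (G : Grp) (a b : G) : Prop :=
  forall u v : list bool, u <> [] -> v <> [] -> u <> v ->
    peval G a b u <> peval G a b v.

Definition has_nonab_free_subsemigroup (G : Grp) : Prop :=
  exists a b : G, free_semigroup_pair G a b.

Definition NS (G : Grp) : Prop := ~ has_nonab_free_subsemigroup G.

Definition in01 (x : R) : Prop := 0 <= x <= 1.

Definition is_PL_homeo (f : R -> R) : Prop :=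
  f 0 = 0 /\ f 1 = 1 /\
  (forall x y, in01 x -> in01 y -> x < y -> f x < f y) /\
  (forall y, in01 y -> exists x, in01 x /\ f x = y) /\
  exists (n : nat) (xs : nat -> R),
    xs O = 0 /\ xs n = 1 /\
    (forall i, (i < n)%nat -> xs i < xs (S i)) /\
    (forall i, (i < n)%nat -> exists c d : R,
        forall x, xs i <= x <= xs (S i) -> f x = c * x + d).

(* G is isomorphic to P: a bijection phi from G onto P (elements of P being
   functions considered on [0,1]) turning the product into composition. *)
Definition iso_to_P (G : Grp) : Prop :=
  exists phi : G -> (R -> R),
    (forall g, is_PL_homeo (phi g)) /\
    (forall h, is_PL_homeo h -> exists g, forall x, in01 x -> phi g x = h x) /\
    (forall g g', (forall x, in01 x -> phi g x = phi g' x) -> g = g') /\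
    (forall g g' x, in01 x -> phi (gmul G g g') x = phi g (phi g' x)).

Inductive inC : Grp -> Prop :=
  | C_NS : forall G, NS G -> inC G
  | C_P : forall G, iso_to_P G -> inC G
  | C_sub : forall (G H : Grp) (f : G -> H),
      is_hom G H f -> (forall x y, f x = f y -> x = y) -> inC H -> inC G
  | C_image : forall (G H : Grp) (f : G -> H),
      is_hom G H f -> (forall y, exists x, f x = y) -> inC G -> inC H
  | C_ext : forall (G N Q : Grp) (i : N -> G) (p : G -> Q),
      is_hom N G i -> (forall x y, i x = i y -> x = y) ->
      is_hom G Q p -> (forall q, exists g, p g = q) ->
      (forall g, p g = gone Q <-> exists n, i n = g) ->
      inC N -> inC Q -> inC G
  | C_dirunion : forall (G : Grp) (I : Type) (Gi : I -> Grp)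
      (j : forall k, Gi k -> G),
      (forall k, is_hom (Gi k) G (j k)) ->
      (forall k x y, j k x = j k y -> x = y) ->
      (forall k1 k2, exists k3,
          (forall x, exists y, j k3 y = j k1 x) /\
          (forall x, exists y, j k3 y = j k2 x)) ->
      (forall g, exists k x, j k x = g) ->
      (forall k, inC (Gi k)) -> inC G.

(* Main.v *)
Require Import Defs.
From Stdlib Require Import Reals Lra Lia List Bool Classical ClassicalEpsilon.
Import ListNotations.

Definition L := (bool * bool)%type.
Definition linv (l : L) : L := (fst l, negb (snd l)).
Definition winv (w : list L) : list L := rev (map linv w).
Definition okj (l l' : L) : Prop := ~ (fst l = fst l' /\ snd l <> snd l').
Definition okb (l l' : L) : bool := negb (Bool.eqb (fst l) (fst l') && negb (Bool.eqb (snd l) (snd l'))).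

Lemma okb_okj : forall l l', okb l l' = true -> okj l l'.
Proof. intros [a b] [c d]; unfold okb, okj; simpl; destruct a,b,c,d; simpl; intuition congruence. Qed.
Lemma okj_okb : forall l l', okj l l' -> okb l l' = true.
Proof. intros [a b] [c d]; unfold okb, okj; simpl; destruct a,b,c,d; simpl; intuition congruence. Qed.
Lemma okj_sym : forall l l', okj l l' -> okj l' l.
Proof. intros [a b] [c d]; unfold okj; simpl; intuition. Qed.
Lemma okj_linv : forall l l', okj l l' -> okj (linv l) (linv l').
Proof. intros [a b] [c d]; unfold okj, linv; simpl; destruct b, d; intuition. Qed.
Lemma okj_linv' : forall l l', okj (linv l) (linv l') -> okj l l'.
Proof. intros [a b] [c d]; unfold okj, linv; simpl; destruct b, d; intuition. Qed.
Lemma okj_refl : forall l, okj l l.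
Proof. intros [a b]; unfold okj; simpl; intuition. Qed.
Lemma linv_linv : forall l, linv (linv l) = l.
Proof. intros [a b]; unfold linv; simpl; rewrite negb_involutive; auto. Qed.

Lemma winv_cons : forall l w, winv (l :: w) = winv w ++ [linv l].
Proof. intros; unfold winv; simpl; auto. Qed.
Lemma winv_app : forall u v, winv (u ++ v) = winv v ++ winv u.
Proof. intros; unfold winv; rewrite map_app, rev_app_distr; auto. Qed.
Lemma winv_winv : forall w, winv (winv w) = w.
Proof. intros; unfold winv; rewrite map_rev, rev_involutive, map_map.
  induction w; simpl; auto; rewrite linv_linv, IHw; auto. Qed.
Lemma winv_nil : forall w, winv w = [] -> w = [].
Proof. intros w H; destruct w; auto; rewrite winv_cons in H; destruct (winv w); discriminate. Qed.
Lemma winv_length : forall w, length (winv w) = length w.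
Proof. intros; unfold winv; rewrite length_rev, length_map; auto. Qed.

Definition d0 : L := (true, true).

Lemma hd_app : forall (u v : list L), u <> [] -> hd d0 (u ++ v) = hd d0 u.
Proof. intros [|x u] v H; [congruence| reflexivity]. Qed.
Lemma last_app : forall (u v : list L), v <> [] -> last (u ++ v) d0 = last v d0.
Proof. intros u v H; induction u as [|x u IH]; simpl; auto.
  rewrite <- IH. destruct u; simpl. destruct v; [congruence|auto]. auto. Qed.
Lemma hd_winv : forall w, w <> [] -> hd d0 (winv w) = linv (last w d0).
Proof. intros w H. destruct (exists_last H) as [w' [y ->]].
  rewrite winv_app, last_last. reflexivity. Qed.
Lemma last_winv : forall w, w <> [] -> last (winv w) d0 = linv (hd d0 w).
Proof. intros w H; destruct w as [|x w]. congruence.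
  rewrite winv_cons, last_app; [reflexivity|discriminate]. Qed.
Lemma reduced_cons : forall l w, reduced (l :: w) -> reduced w.
Proof. intros l [|x w] H; simpl in *; tauto. Qed.

Lemma reduced_app : forall u v, reduced u -> reduced v ->
  (u <> [] -> v <> [] -> okj (last u d0) (hd d0 v)) -> reduced (u ++ v).
Proof.
  induction u as [|x u IH]; intros v Hu Hv Hj; simpl; auto.
  destruct u as [|y u'].
  - simpl. destruct v as [|z v]; auto. split; [|auto]. apply Hj; discriminate.
  - simpl in Hu. destruct Hu as [H1 H2]. split; auto.
    apply IH; auto. intros _ Hne. specialize (Hj ltac:(discriminate) Hne). auto.
Qed.

Lemma reduced_app_l : forall u v, reduced (u ++ v) -> reduced u.
Proof. induction u as [|x u IH]; intros v H; simpl; auto.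
  destruct u as [|y u']; auto. simpl in H. destruct H as [H1 H2]. split; auto. apply (IH v). exact H2. Qed.
Lemma reduced_app_r : forall u v, reduced (u ++ v) -> reduced v.
Proof. induction u as [|x u IH]; intros v H; simpl in *; auto. apply IH. eapply reduced_cons; eauto. Qed.

Lemma reduced_winv : forall w, reduced w -> reduced (winv w).
Proof.
  induction w as [|x w IH]; intros H; [simpl; auto|].
  rewrite winv_cons. apply reduced_app; auto. apply IH; eapply reduced_cons; eauto. simpl; auto.
  intros Hne _. destruct w as [|y w']. exfalso; apply Hne; reflexivity.
  rewrite last_winv by discriminate. simpl. simpl in H. destruct H as [H _]. apply okj_linv. apply okj_sym. exact H.
Qed.

Section GrpLemmas.
Variable G : Grp.

Lemma g_mulVr : forall x, gmul G x (ginv G x) = gone G.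
Proof.
  intros x.
  rewrite <- (gmul1 G (gmul G x (ginv G x))). rewrite <- (gmulV G (ginv G x)) at 1.
  rewrite <- gmulA. rewrite (gmulA G (ginv G x) x). rewrite gmulV.
  rewrite gmul1. apply gmulV.
Qed.
Lemma g_mul1r : forall x, gmul G x (gone G) = x.
Proof. intros x. rewrite <- (gmulV G x). rewrite gmulA. rewrite g_mulVr. apply gmul1. Qed.
Lemma g_cancel_l : forall z x y, gmul G z x = gmul G z y -> x = y.
Proof. intros z x y H. rewrite <- (gmul1 G x), <- (gmul1 G y), <- (gmulV G z), <- !gmulA, H; auto. Qed.
Lemma g_cancel_r : forall z x y, gmul G x z = gmul G y z -> x = y.
Proof. intros z x y H. rewrite <- (g_mul1r x), <- (g_mul1r y), <- (g_mulVr z), !gmulA, H; auto. Qed.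
Lemma g_inv_uniq : forall x y, gmul G x y = gone G -> y = ginv G x.
Proof. intros x y H. apply (g_cancel_l x). rewrite H, g_mulVr; auto. Qed.
Lemma g_inv_mul : forall x y, ginv G (gmul G x y) = gmul G (ginv G y) (ginv G x).
Proof. intros x y. symmetry. apply g_inv_uniq. rewrite <- gmulA, (gmulA G y), g_mulVr, gmul1, g_mulVr; auto. Qed.
Lemma g_inv_inv : forall x, ginv G (ginv G x) = x.
Proof. intros x. symmetry. apply g_inv_uniq. apply gmulV. Qed.
Lemma g_inv_one : ginv G (gone G) = gone G.
Proof. symmetry; apply g_inv_uniq; apply gmul1. Qed.

Lemma gletter_linv : forall a b l, gletter G a b (linv l) = ginv G (gletter G a b l).
Proof. intros a b [x s]; unfold gletter, linv; simpl; destruct s; simpl; auto. rewrite g_inv_inv; auto. Qed.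
Lemma geval_app : forall a b u v, geval G a b (u ++ v) = gmul G (geval G a b u) (geval G a b v).
Proof. intros a b u v; induction u; simpl. rewrite gmul1; auto. rewrite IHu, gmulA; auto. Qed.
Lemma geval_winv : forall a b w, geval G a b (winv w) = ginv G (geval G a b w).
Proof. intros a b w; induction w as [|x w IH]; simpl. rewrite g_inv_one; auto.
  rewrite winv_cons, geval_app, IH, g_inv_mul. simpl. rewrite gletter_linv, g_mul1r; auto. Qed.

End GrpLemmas.

Lemma hom_one : forall G H f, is_hom G H f -> f (gone G) = gone H.
Proof. intros G H f Hf. apply (g_cancel_l H (f (gone G))). rewrite <- Hf, gmul1, g_mul1r; auto. Qed.
Lemma hom_inv : forall G H f, is_hom G H f -> forall x, f (ginv G x) = ginv H (f x).
Proof. intros G H f Hf x. apply g_inv_uniq. rewrite <- Hf, g_mulVr. apply hom_one; auto. Qed.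
Lemma hom_geval : forall G H f, is_hom G H f -> forall a b w, f (geval G a b w) = geval H (f a) (f b) w.
Proof. intros G H f Hf a b w; induction w as [|l w IH]; simpl. apply hom_one; auto.
  rewrite Hf, IH. f_equal. unfold gletter. destruct (fst l), (snd l); auto; apply hom_inv; auto. Qed.


Lemma okj_same : forall l l', okj l l' -> fst l = fst l' -> snd l = snd l'.
Proof. intros [a b] [c d]; unfold okj; simpl; intros H E; destruct b, d; auto; exfalso; apply H; split; auto; congruence. Qed.

Section Expand.
Variables (w z : list L).
Definition yl (l : L) : bool := negb (fst l).
Definition bodyb (e : bool) : list L := if e then w else winv w.
Definition pre (s : bool) (l : L) : list L :=
  if yl l then (if s then [] else z) else (if s then winv z else []).
Fixpoint E (s : bool) (v : list L) : list L :=
  match v with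
  | [] => if s then winv z else []
  | l :: v' => pre s l ++ bodyb (snd l) ++ E (yl l) v'
  end.

Hypothesis Hw : w <> [].
Hypothesis Hz : z <> [].
Hypothesis Hrw : reduced w.
Hypothesis Hrz : reduced z.
Hypothesis H1 : forall e, okj (last z d0) (hd d0 (bodyb e)).
Hypothesis H2 : forall e, okj (last (winv z) d0) (hd d0 (bodyb e)).
Hypothesis H3 : forall e, okj (last (bodyb e) d0) (hd d0 (bodyb e)).
Hypothesis H4 : forall e, okj (last (bodyb e) d0) (hd d0 z).
Hypothesis H5 : forall e, okj (last (bodyb e) d0) (hd d0 (winv z)).

Lemma bodyb_ne : forall e, bodyb e <> [].
Proof. intros [|]; simpl; auto. intro H; apply Hw; apply winv_nil; auto. Qed.
Lemma winvz_ne : winv z <> [].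
Proof. intro H; apply Hz; apply winv_nil; auto. Qed.
Lemma bodyb_red : forall e, reduced (bodyb e).
Proof. intros [|]; simpl; auto. apply reduced_winv; auto. Qed.

Lemma E_red : forall v s, reduced v ->
  reduced (E s v) /\
  (forall l v', v = l :: v' -> E s v <> [] /\ hd d0 (E s v) = hd d0 (pre s l ++ bodyb (snd l))).
Proof.
  induction v as [|l v IH]; intros s Hv.
  - split. simpl. destruct s; simpl; auto. apply reduced_winv; auto. intros; discriminate.
  - assert (Hv' : reduced v) by (eapply reduced_cons; eauto).
    destruct (IH (yl l) Hv') as [IHr IHh].
    assert (Hbr : reduced (bodyb (snd l) ++ E (yl l) v)).
    { apply reduced_app; auto. apply bodyb_red. intros _ Hne.
      destruct v as [|l' v'].
      - simpl in Hne |- *. destruct (yl l); [|exfalso; apply Hne; reflexivity]. apply H5.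
      - destruct (IHh l' v' eq_refl) as [_ Hh]. rewrite Hh.
        unfold pre. destruct (yl l') eqn:Ey', (yl l) eqn:Ey.
        + simpl.
          simpl in Hv. destruct Hv as [Hok _].
          assert (snd l = snd l').
          { apply okj_same; auto. unfold yl in Ey, Ey'. destruct (fst l), (fst l'); simpl in *; congruence. }
          rewrite H. apply H3.
        + rewrite hd_app by exact Hz. apply H4.
        + rewrite hd_app by exact winvz_ne. apply H5.
        + simpl. simpl in Hv. destruct Hv as [Hok _].
          assert (snd l = snd l').
          { apply okj_same; auto. unfold yl in Ey, Ey'. destruct (fst l), (fst l'); simpl in *; congruence. }
          rewrite H. apply H3. }
    split.
    + simpl. apply reduced_app; auto.
      * unfold pre; destruct (yl l), s; simpl; auto; apply reduced_winv; auto.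
      * intros Hne _. rewrite hd_app by apply bodyb_ne.
        unfold pre in *; destruct (yl l), s; try (exfalso; apply Hne; reflexivity); auto.
    + intros l0 v0 Heq. injection Heq as <- <-. simpl. split.
      * intro Hn. apply app_eq_nil in Hn. destruct Hn as [_ Hn]. apply app_eq_nil in Hn.
        destruct Hn as [Hn _]. exact (bodyb_ne _ Hn).
      * rewrite app_assoc. destruct (pre s l ++ bodyb (snd l)) eqn:Ep.
        { apply app_eq_nil in Ep. destruct Ep as [_ Ep]. exfalso; exact (bodyb_ne _ Ep). }
        reflexivity.
Qed.

Lemma E_ne : forall v s, reduced v -> v <> [] -> E s v <> [].
Proof. intros [|l v] s Hv Hne; [congruence|]. exact (proj1 (proj2 (E_red (l::v) s Hv) l v eq_refl)). Qed.

Variable G : Grp.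
Variables a b : G.
Definition Xg := geval G a b w.
Definition Zg := geval G a b z.
Definition Yg := gmul G Zg (gmul G Xg (ginv G Zg)).

Lemma E_val : forall v s, geval G a b (E s v) =
  if s then gmul G (ginv G Zg) (geval G Xg Yg v) else geval G Xg Yg v.
Proof.
  induction v as [|l v IH]; intros s.
  - simpl. destruct s; simpl. rewrite geval_winv, g_mul1r. reflexivity. reflexivity.
  - simpl. rewrite !geval_app, IH.
    assert (Hb : geval G a b (bodyb (snd l)) = if snd l then Xg else ginv G Xg).
    { unfold bodyb; destruct (snd l); auto. rewrite geval_winv; auto. }
    rewrite Hb. unfold pre, yl, gletter.
    destruct l as [t e]; simpl.
    assert (HYi : ginv G Yg = gmul G Zg (gmul G (ginv G Xg) (ginv G Zg))).
    { unfold Yg. rewrite !g_inv_mul, g_inv_inv, gmulA; auto. }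
    destruct t, e, s; simpl; rewrite ?geval_winv; fold Zg;
      rewrite ?gmul1, ?HYi; unfold Yg; rewrite ?gmulA; auto;
      repeat (rewrite ?gmulA, ?g_mulVr, ?gmulV, ?gmul1; try reflexivity);
      rewrite <- !gmulA; repeat (rewrite ?g_mulVr, ?gmulV, ?g_mul1r, ?gmul1; try reflexivity).
Qed.

End Expand.


Definition goodz (w z : list L) : Prop :=
  w <> [] /\ z <> [] /\ reduced w /\ reduced z /\ okj (last w d0) (hd d0 w) /\
  okj (last z d0) (hd d0 w) /\ okj (last z d0) (linv (last w d0)) /\
  okj (linv (hd d0 z)) (hd d0 w) /\ okj (last w d0) (hd d0 z).

Lemma okj_iff_lin : forall x y, okj x y -> okj (linv y) (linv x).
Proof. intros; apply okj_linv, okj_sym; auto. Qed.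

Lemma okj_f1 : forall x y, okj (linv x) y -> okj (linv y) x.
Proof. intros [a b] [c d]; unfold okj, linv; simpl; destruct b, d; intuition. Qed.
Lemma okj_f2 : forall x y, okj x (linv y) -> okj y (linv x).
Proof. intros [a b] [c d]; unfold okj, linv; simpl; destruct b, d; intuition. Qed.

Lemma goodz_E : forall w z, goodz w z -> forall v, v <> [] -> reduced v ->
  E w z false v <> [] /\ reduced (E w z false v).
Proof.
  intros w z [Hw [Hz [Hrw [Hrz [Hc [K1 [K2 [K3 K4]]]]]]]] v Hv Hr.
  assert (HH1 : forall e, okj (last z d0) (hd d0 (bodyb w e))).
  { intros [|]; simpl; auto. rewrite hd_winv by auto. auto. }
  assert (HH2 : forall e, okj (last (winv z) d0) (hd d0 (bodyb w e))).
  { intros [|]; simpl; rewrite last_winv by auto. auto.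
    rewrite hd_winv by auto. apply okj_linv, okj_sym; auto. }
  assert (HH3 : forall e, okj (last (bodyb w e) d0) (hd d0 (bodyb w e))).
  { intros [|]; simpl; auto. rewrite hd_winv, last_winv by auto. apply okj_iff_lin; auto. }
  assert (HH4 : forall e, okj (last (bodyb w e) d0) (hd d0 z)).
  { intros [|]; simpl; auto. rewrite last_winv by auto. apply okj_f1; auto. }
  assert (HH5 : forall e, okj (last (bodyb w e) d0) (hd d0 (winv z))).
  { intros [|]; simpl; rewrite hd_winv by auto.
    apply okj_f2; auto. rewrite last_winv by auto. apply okj_iff_lin; auto. }
  split.
  - apply (E_ne w z Hw Hz Hrw Hrz HH1 HH2 HH3 HH4 HH5); auto.
  - apply (E_red w z Hw Hz Hrw Hrz HH1 HH2 HH3 HH4 HH5); auto.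
Qed.

Lemma expand_free : forall (G : Grp) a b w z, free_pair G a b -> goodz w z ->
  forall v, v <> [] -> reduced v -> geval G (Xg w G a b) (Yg w z G a b) v <> gone G.
Proof.
  intros G a b w z Hf Hg v Hv Hr.
  rewrite <- (E_val w z G a b v false).
  destruct (goodz_E w z Hg v Hv Hr). apply Hf; auto.
Qed.

Lemma cyc_red : forall n w, (length w <= n)%nat -> reduced w -> w <> [] ->
  exists c w', w = c ++ w' ++ winv c /\ w' <> [] /\ reduced w' /\ okj (last w' d0) (hd d0 w').
Proof.
  induction n as [|n IH]; intros w Hn Hr Hne.
  - destruct w; simpl in Hn; [congruence|lia].
  - destruct (classic (okj (last w d0) (hd d0 w))) as [Hok|Hnok].
    + exists [], w. simpl. rewrite app_nil_r. auto.
    + destruct w as [|l w1]; [congruence|].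
      destruct w1 as [|m w2]. { exfalso; apply Hnok; apply okj_refl. }
      assert (Hne1 : m :: w2 <> []) by discriminate.
      destruct (exists_last Hne1) as [mid [l' Heq]].
      rewrite Heq in *.
      assert (Hl' : l' = linv l).
      { replace (last (l :: mid ++ [l']) d0) with l' in Hnok
          by (rewrite app_comm_cons, last_last; auto).
        destruct l as [a1 b1], l' as [a2 b2]; unfold okj, linv in *; simpl in *.
        destruct a1, a2, b1, b2; try reflexivity; exfalso; apply Hnok; simpl; intros [X Y]; congruence. }
      subst l'.
      assert (Hmid : mid <> []).
      { intro E; subst mid. simpl in Hr. destruct Hr as [Hr _]. apply Hr.
        destruct l as [a1 b1]; unfold linv; simpl. split; auto. destruct b1; discriminate. }
      assert (Hrm : reduced mid).
      { assert (reduced (mid ++ [linv l])) by (eapply reduced_cons; exact Hr).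
        eapply reduced_app_l; eauto. }
      assert (Hlen : (length mid <= n)%nat).
      { simpl in Hn. rewrite length_app in Hn. simpl in Hn. lia. }
      destruct (IH mid Hlen Hrm Hmid) as [c [w' [Hc Hw']]].
      exists (l :: c), w'. split; auto.
      rewrite winv_cons. rewrite Hc. simpl. rewrite !app_assoc. reflexivity.
Qed.

Definition allL : list L := [(true,true);(true,false);(false,true);(false,false)].

Lemma allL_in : forall l, In l allL.
Proof. intros [[|] [|]]; simpl; auto 10. Qed.

Definition condb (x1 xn t1 t2 : L) : bool :=
  okb t1 t2 && okb t2 x1 && okb t2 (linv xn) && okb (linv t1) x1 && okb xn t1.

Lemma condb_ex : forall x1 xn, exists t1 t2, condb x1 xn t1 t2 = true.
Proof.
  intros [[|] [|]] [[|] [|]];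
  match goal with |- exists t1 t2, condb ?x ?y t1 t2 = true =>
    let H := fresh in
    assert (H : existsb (fun t1 => existsb (fun t2 => condb x y t1 t2) allL) allL = true) by reflexivity;
    apply existsb_exists in H; destruct H as [t1 [_ H]];
    apply existsb_exists in H; destruct H as [t2 [_ H]]; exists t1, t2; exact H end.
Qed.

Lemma goodz_pair : forall w, w <> [] -> reduced w -> okj (last w d0) (hd d0 w) ->
  exists t1 t2, goodz w [t1; t2].
Proof.
  intros w Hw Hr Hc. destruct (condb_ex (hd d0 w) (last w d0)) as [t1 [t2 H]].
  unfold condb in H. repeat rewrite andb_true_iff in H.
  destruct H as [[[[A B] C] D] E'].
  exists t1, t2. unfold goodz; simpl. repeat split; auto; try discriminate; try (apply okb_okj; auto).
Qed.


Definition pos (u : list bool) : list L := map (fun x => (x, true)) u.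

Lemma peval_pos : forall G a b u, peval G a b u = geval G a b (pos u).
Proof. intros G a b u; induction u; simpl; auto. rewrite IHu. destruct a0; auto. Qed.

Lemma pos_red : forall u, reduced (pos u).
Proof. induction u as [|x u IH]; simpl; auto. destruct u as [|y u]; simpl; auto.
  split; [unfold okj; simpl; intuition|exact IH]. Qed.

Lemma nsg : forall G a b, free_pair G a b -> forall n u v, (length u + length v <= n)%nat ->
  u <> v -> geval G a b (pos u) = geval G a b (pos v) -> False.
Proof.
  intros G a b Hf n. induction n as [|n IH]; intros u v Hn Hne Heq.
  - destruct u, v; simpl in Hn; try lia. congruence.
  - destruct (list_eq_dec Bool.bool_dec u []) as [Hu|Hu].
    { subst u. apply (Hf (pos v)). destruct v; [congruence|discriminate]. apply pos_red. rewrite <- Heq; reflexivity. }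
    destruct (list_eq_dec Bool.bool_dec v []) as [Hv|Hv].
    { subst v. apply (Hf (pos u)). destruct u; [congruence|discriminate]. apply pos_red. rewrite Heq; reflexivity. }
    destruct (exists_last Hu) as [u1 [l1 ->]]. destruct (exists_last Hv) as [v1 [l2 ->]].
    unfold pos in Heq. rewrite !map_app in Heq. fold (pos u1) (pos v1) in Heq.
    rewrite !geval_app in Heq. simpl in Heq.
    destruct (Bool.bool_dec l1 l2) as [E|E].
    + subst l2. apply g_cancel_r in Heq. apply (IH u1 v1).
      rewrite !length_app in Hn; simpl in Hn; lia.
      intro; subst; congruence. exact Heq.
    + apply (Hf (pos (u1 ++ [l1]) ++ winv (pos (v1 ++ [l2])))).
      * destruct u1; discriminate.
      * apply reduced_app; try apply pos_red. apply reduced_winv, pos_red.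
        intros _ _. rewrite hd_winv by (destruct v1; discriminate).
        unfold pos; rewrite !map_app; simpl map; rewrite !last_last. unfold okj, linv; simpl. intuition.
      * rewrite geval_app, geval_winv. unfold pos; rewrite !map_app, !geval_app. simpl.
        fold (pos u1) (pos v1). rewrite Heq. apply g_mulVr.
Qed.

Lemma ns_case : forall G, NS G -> ~ has_nonab_free_subgroup G.
Proof.
  intros G HNS [a [b Hf]]. apply HNS. exists a, b. intros u v Hu Hv Huv Heq.
  rewrite !peval_pos in Heq. eapply (nsg G a b Hf); eauto.
Qed.

Lemma sub_case : forall G H f, is_hom G H f -> (forall x y, f x = f y -> x = y) ->
  ~ has_nonab_free_subgroup H -> ~ has_nonab_free_subgroup G.
Proof.
  intros G H f Hf Hi HH [a [b Hab]]. apply HH. exists (f a), (f b). intros w Hw Hr E.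
  rewrite <- hom_geval in E by auto. rewrite <- (hom_one G H f Hf) in E. apply Hi in E.
  exact (Hab w Hw Hr E).
Qed.

Lemma image_case : forall G H f, is_hom G H f -> (forall y, exists x, f x = y) ->
  ~ has_nonab_free_subgroup G -> ~ has_nonab_free_subgroup H.
Proof.
  intros G H f Hf Hs HG [a [b Hab]]. apply HG.
  destruct (Hs a) as [a' Ha], (Hs b) as [b' Hb]. exists a', b'. intros w Hw Hr E.
  apply (Hab w Hw Hr). rewrite <- Ha, <- Hb, <- hom_geval by auto. rewrite E. apply hom_one; auto.
Qed.

Lemma dir_case : forall (G : Grp) (I : Type) (Gi : I -> Grp) (j : forall k, Gi k -> G),
      (forall k, is_hom (Gi k) G (j k)) ->
      (forall k x y, j k x = j k y -> x = y) ->
      (forall k1 k2, exists k3,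
          (forall x, exists y, j k3 y = j k1 x) /\
          (forall x, exists y, j k3 y = j k2 x)) ->
      (forall g, exists k x, j k x = g) ->
      (forall k, ~ has_nonab_free_subgroup (Gi k)) -> ~ has_nonab_free_subgroup G.
Proof.
  intros G I Gi j Hh Hi Hd Hc HF [a [b Hab]].
  destruct (Hc a) as [k1 [x Hx]], (Hc b) as [k2 [y Hy]].
  destruct (Hd k1 k2) as [k3 [H1 H2]]. destruct (H1 x) as [x' Hx'], (H2 y) as [y' Hy'].
  apply (HF k3).
  exists x', y'. intros w Hw Hr E. apply (Hab w Hw Hr).
  rewrite <- Hx, <- Hy, <- Hx', <- Hy', <- hom_geval by auto. rewrite E. apply hom_one; auto.
Qed.


Lemma conj_one : forall (G : Grp) c x, gmul G c (gmul G x (ginv G c)) = gone G -> x = gone G.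
Proof.
  intros G c x H. apply (g_cancel_l G c). rewrite g_mul1r.
  apply (g_cancel_r G (ginv G c)). rewrite <- gmulA, H, g_mulVr. reflexivity.
Qed.

Lemma not_free_ex : forall G a b, ~ free_pair G a b ->
  exists w, w <> [] /\ reduced w /\ geval G a b w = gone G.
Proof.
  intros G a b H. apply NNPP. intro H'. apply H. intros w Hw Hr E. apply H'. exists w; auto.
Qed.

Lemma ext_case : forall (G N Q : Grp) (i : N -> G) (p : G -> Q),
      is_hom N G i -> (forall x y, i x = i y -> x = y) ->
      is_hom G Q p -> (forall q, exists g, p g = q) ->
      (forall g, p g = gone Q <-> exists n, i n = g) ->
      ~ has_nonab_free_subgroup N -> ~ has_nonab_free_subgroup Q -> ~ has_nonab_free_subgroup G.
Proof.
  intros G N Q i p Hi Hii Hp Hps Hk HN HQ [a [b Hab]].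
  assert (Hnf : ~ free_pair Q (p a) (p b)) by (intro Hq; apply HQ; exists (p a), (p b); exact Hq).
  destruct (not_free_ex _ _ _ Hnf) as [w [Hw [Hr Hev]]].
  rewrite <- hom_geval in Hev by auto.
  destruct (cyc_red (length w) w (le_n _) Hr Hw) as [c [w' [Hc [Hw' [Hr' Hcy]]]]].
  destruct (goodz_pair w' Hw' Hr' Hcy) as [t1 [t2 Hg]].
  set (z := [t1; t2]) in *.
  assert (HX : p (Xg w' G a b) = gone Q).
  { rewrite Hc, !geval_app, geval_winv in Hev. rewrite !Hp, hom_inv in Hev by auto.
    eapply conj_one; eauto. }
  assert (HY : p (Yg w' z G a b) = gone Q).
  { unfold Yg. rewrite !Hp, HX, hom_inv, gmul1, g_mulVr by auto. reflexivity. }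
  apply Hk in HX. apply Hk in HY. destruct HX as [n1 Hn1], HY as [n2 Hn2].
  apply HN. exists n1, n2. intros v Hv Hrv E.
  apply (expand_free G a b w' z Hab Hg v Hv Hrv).
  rewrite <- Hn1, <- Hn2, <- hom_geval by auto. rewrite E. apply hom_one; auto.
Qed.


Open Scope R_scope.

Lemma PL_lt : forall h x y, is_PL_homeo h -> in01 x -> in01 y -> x < y -> h x < h y.
Proof. intros h x y [_ [_ [H _]]]; auto. Qed.
Lemma PL_le : forall h x y, is_PL_homeo h -> in01 x -> in01 y -> x <= y -> h x <= h y.
Proof. intros h x y Hh Hx Hy Hxy. destruct (Rle_lt_or_eq_dec _ _ Hxy). left; apply PL_lt; auto. subst; lra. Qed.
Lemma PL_lt_rev : forall h x y, is_PL_homeo h -> in01 x -> in01 y -> h x < h y -> x < y.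
Proof. intros h x y Hh Hx Hy H. destruct (Rlt_or_le x y); auto. pose proof (PL_le h y x Hh Hy Hx H0); lra. Qed.
Lemma PL_le_rev : forall h x y, is_PL_homeo h -> in01 x -> in01 y -> h x <= h y -> x <= y.
Proof. intros h x y Hh Hx Hy H. destruct (Rle_or_lt x y); auto. pose proof (PL_lt h y x Hh Hy Hx H0); lra. Qed.
Lemma PL_in : forall h x, is_PL_homeo h -> in01 x -> in01 (h x).
Proof. intros h x Hh Hx. pose proof Hh as [H0 [H1 _]].
  assert (in01 0) by (unfold in01; lra). assert (in01 1) by (unfold in01; lra).
  pose proof (PL_le h 0 x Hh H Hx ltac:(unfold in01 in Hx; lra)).
  pose proof (PL_le h x 1 Hh Hx H2 ltac:(unfold in01 in Hx; lra)). unfold in01; lra. Qed.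

Lemma find_piece_r : forall (xs : nat -> R) m p, xs O <= p -> p < xs m ->
  exists i, (i < m)%nat /\ xs i <= p < xs (S i).
Proof. intros xs m p H0. induction m as [|m IH]; intros H. lra.
  destruct (Rlt_or_le p (xs m)) as [Hl|Hl]. destruct (IH Hl) as [i [Hi Hp]]. exists i; split; auto; lia.
  exists m; split; auto; lra. Qed.
Lemma find_piece_l : forall (xs : nat -> R) m p, xs O < p -> p <= xs m ->
  exists i, (i < m)%nat /\ xs i < p <= xs (S i).
Proof. intros xs m p H0. induction m as [|m IH]; intros H. lra.
  destruct (Rlt_or_le (xs m) p) as [Hl|Hl]. exists m; split; auto; lra.
  destruct (IH Hl) as [i [Hi Hp]]. exists i; split; auto; lia. Qed.

Definition LinG (sg : R) (h : R -> R) (p s : R) : Prop :=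
  exists e, e > 0 /\ forall x, 0 <= sg * (x - p) <= e -> in01 x /\ h x = p + s * (x - p).

Lemma PL_germ : forall h p sg, is_PL_homeo h -> in01 p -> h p = p ->
  (sg = 1 /\ p < 1 \/ sg = -1 /\ 0 < p) -> exists s, s > 0 /\ LinG sg h p s.
Proof.
  intros h p sg Hh Hp Hfix Hsg. pose proof Hh as [H0 [H1 [Hmono [_ [n [xs [X0 [Xn [Xinc Xlin]]]]]]]]].
  unfold in01 in Hp.
  destruct Hsg as [[-> Hp1]|[-> Hp0]].
  - destruct (find_piece_r xs n p ltac:(lra) ltac:(lra)) as [i [Hi Hpi]].
    destruct (Xlin i Hi) as [c [d Hcd]].
    assert (Hxsl : xs (S i) <= 1).
    { clear -Xinc Xn Hi. rewrite <- Xn. assert (forall k, (S i + k <= n)%nat -> xs (S i) <= xs (S i + k)%nat).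
      { induction k; intros. rewrite Nat.add_0_r; lra. pose proof (Xinc (S i + k)%nat ltac:(lia)).
        rewrite Nat.add_succ_r. specialize (IHk ltac:(lia)). lra. }
      specialize (H (n - S i)%nat ltac:(lia)). replace (S i + (n - S i))%nat with n in H by lia. exact H. }
    assert (Hd : d = p - c * p) by (pose proof (Hcd p ltac:(lra)); lra).
    set (e := xs (S i) - p).
    assert (He : e > 0) by (unfold e; lra).
    assert (Hc : c > 0).
    { assert (h p < h (p + e)) by (apply Hmono; unfold in01, e; lra).
      rewrite (Hcd p), (Hcd (p+e)) in H by (unfold e; lra). nra. }
    exists c; split; auto. exists e; split; auto. intros x Hx.
    split. unfold in01, e in *; lra. rewrite Hcd by (unfold e in *; lra). rewrite Hd; ring.
  - destruct (find_piece_l xs n p ltac:(lra) ltac:(lra)) as [i [Hi Hpi]].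
    destruct (Xlin i Hi) as [c [d Hcd]].
    assert (Hxsl : xs i >= 0).
    { clear -Xinc X0 Hi. rewrite <- X0. assert (forall k, (k <= i)%nat -> xs 0%nat <= xs k).
      { induction k; intros. lra. pose proof (Xinc k ltac:(lia)). specialize (IHk ltac:(lia)). lra. }
      apply Rle_ge, H; lia. }
    assert (Hd : d = p - c * p) by (pose proof (Hcd p ltac:(lra)); lra).
    set (e := p - xs i).
    assert (He : e > 0) by (unfold e; lra).
    assert (Hc : c > 0).
    { assert (h (p - e) < h p) by (apply Hmono; unfold in01, e; lra).
      rewrite (Hcd p), (Hcd (p-e)) in H by (unfold e; lra). nra. }
    exists c; split; auto. exists e; split; auto. intros x Hx.
    split. unfold in01, e in *; lra. rewrite Hcd by (unfold e in *; lra). rewrite Hd; ring.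
Qed.

Lemma LinG_comp : forall sg h1 h2 p s1 s2, LinG sg h1 p s1 -> LinG sg h2 p s2 -> s2 > 0 ->
  LinG sg (fun x => h1 (h2 x)) p (s1 * s2).
Proof.
  intros sg h1 h2 p s1 s2 [e1 [He1 H1]] [e2 [He2 H2]] Hs2.
  exists (Rmin e2 (e1 / s2)). split. apply Rmin_pos; auto. apply Rdiv_lt_0_compat; auto.
  intros x Hx. assert (Hm1 := Rmin_l e2 (e1/s2)). assert (Hm2 := Rmin_r e2 (e1/s2)).
  destruct (H2 x ltac:(lra)) as [Hin Hx2]. split; auto. rewrite Hx2.
  assert (Hr : 0 <= sg * (p + s2 * (x - p) - p) <= e1).
  { replace (sg * (p + s2 * (x - p) - p)) with (s2 * (sg * (x - p))) by ring.
    split. apply Rmult_le_pos; lra.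
    apply Rle_trans with (s2 * (e1 / s2)). apply Rmult_le_compat_l; lra.
    right; field; lra. }
  destruct (H1 _ Hr) as [_ ->]. ring.
Qed.

Lemma LinG_pt : forall sg h p s, LinG sg h p s -> (sg = 1 \/ sg = -1) ->
  exists x, x <> p /\ 0 <= sg * (x - p) /\ in01 x /\ h x = p + s * (x - p).
Proof.
  intros sg h p s [e [He H]] Hsg. exists (p + sg * e).
  assert (Hs2 : sg * sg = 1) by (destruct Hsg; subst; ring).
  assert (Hr : 0 <= sg * (p + sg * e - p) <= e).
  { replace (sg * (p + sg * e - p)) with ((sg * sg) * e) by ring. rewrite Hs2; lra. }
  destruct (H _ Hr) as [Hin Hv]. split; [|split; [lra|auto]].
  intro E. assert (sg * e = 0) by lra. destruct Hsg; subst; lra.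
Qed.

Open Scope R_scope.

Section PP.
Variable G : Grp.
Variable phi : G -> R -> R.
Hypothesis HPL : forall g, is_PL_homeo (phi g).
Hypothesis Hinj : forall g g', (forall x, in01 x -> phi g x = phi g' x) -> g = g'.
Hypothesis Hmul : forall g g' x, in01 x -> phi (gmul G g g') x = phi g (phi g' x).

Lemma Ph_in : forall u x, in01 x -> in01 (phi u x).
Proof. intros; apply PL_in; auto. Qed.
Lemma Ph_one : forall x, in01 x -> phi (gone G) x = x.
Proof. intros x Hx. assert (H := Hmul (gone G) (gone G) x Hx). rewrite gmul1 in H.
  destruct (Rtotal_order (phi (gone G) x) x) as [Hl|[He|Hg]]; auto.
  - pose proof (PL_lt _ _ _ (HPL (gone G)) (Ph_in (gone G) x Hx) Hx Hl). lra.
  - pose proof (PL_lt _ _ _ (HPL (gone G)) Hx (Ph_in (gone G) x Hx) Hg). lra. Qed.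
Lemma Ph_invl : forall u x, in01 x -> phi (ginv G u) (phi u x) = x.
Proof. intros u x Hx. rewrite <- Hmul, gmulV, Ph_one; auto. Qed.
Lemma Ph_invr : forall u x, in01 x -> phi u (phi (ginv G u) x) = x.
Proof. intros u x Hx. rewrite <- Hmul, g_mulVr, Ph_one; auto. Qed.
Lemma Ph_fix_inv : forall u x, in01 x -> phi u x = x -> phi (ginv G u) x = x.
Proof. intros u x Hx H. rewrite <- H at 1. apply Ph_invl; auto. Qed.
Lemma Ph_lt : forall u x y, in01 x -> in01 y -> x < y -> phi u x < phi u y.
Proof. intros; apply PL_lt; auto. Qed.
Lemma Ph_le : forall u x y, in01 x -> in01 y -> x <= y -> phi u x <= phi u y.
Proof. intros; apply PL_le; auto. Qed.
Lemma Ph_lt_rev : forall u x y, in01 x -> in01 y -> phi u x < phi u y -> x < y.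
Proof. intros; eapply PL_lt_rev; eauto. Qed.
Lemma Ph_le_rev : forall u x y, in01 x -> in01 y -> phi u x <= phi u y -> x <= y.
Proof. intros; eapply PL_le_rev; eauto. Qed.
Lemma Ph_inv_ge : forall u y, in01 y -> phi u y <= y -> y <= phi (ginv G u) y.
Proof. intros u y Hy H. apply (Ph_le_rev u); auto. apply Ph_in; auto. rewrite Ph_invr; auto. Qed.

Lemma LinG_ext : forall sg h h' p s, (forall x, in01 x -> h x = h' x) -> LinG sg h p s -> LinG sg h' p s.
Proof. intros sg h h' p s E [e [He H]]. exists e; split; auto. intros x Hx. destruct (H x Hx) as [Hi Hv].
  split; auto. rewrite <- E; auto. Qed.

Lemma Ph_germ : forall u p sg, in01 p -> phi u p = p ->
  (sg = 1 /\ p < 1 \/ sg = -1 /\ 0 < p) -> exists s, s > 0 /\ LinG sg (phi u) p s.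
Proof. intros; apply PL_germ; auto. Qed.

Lemma inv_slope : forall u p sg s s', (sg = 1 \/ sg = -1) -> LinG sg (phi u) p s ->
  LinG sg (phi (ginv G u)) p s' -> s > 0 -> s' * s = 1.
Proof.
  intros u p sg s s' Hsg H1 H2 Hs.
  destruct (LinG_pt _ _ _ _ (LinG_comp sg _ _ p s' s H2 H1 Hs) Hsg) as [x [Hx [_ [Hin Hv]]]].
  rewrite Ph_invl in Hv by auto.
  assert ((s' * s - 1) * (x - p) = 0) by lra.
  apply Rmult_integral in H. destruct H; lra.
Qed.

Definition comm (u v : G) : G := gmul G u (gmul G v (gmul G (ginv G u) (ginv G v))).

Lemma Ph_comm : forall u v x, in01 x ->
  phi (comm u v) x = phi u (phi v (phi (ginv G u) (phi (ginv G v) x))).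
Proof. intros u v x Hx. unfold comm. rewrite !Hmul; auto; repeat apply Ph_in; auto. Qed.

Lemma comm_germ : forall u v p sg, in01 p -> phi u p = p -> phi v p = p ->
  (sg = 1 /\ p < 1 \/ sg = -1 /\ 0 < p) -> LinG sg (phi (comm u v)) p 1.
Proof.
  intros u v p sg Hp Hu Hv Hsg.
  assert (Hsg' : sg = 1 \/ sg = -1) by (destruct Hsg as [[]|[]]; auto).
  destruct (Ph_germ u p sg Hp Hu Hsg) as [su [Hsu Lu]].
  destruct (Ph_germ v p sg Hp Hv Hsg) as [sv [Hsv Lv]].
  destruct (Ph_germ (ginv G u) p sg Hp (Ph_fix_inv u p Hp Hu) Hsg) as [su' [Hsu' Lu']].
  destruct (Ph_germ (ginv G v) p sg Hp (Ph_fix_inv v p Hp Hv) Hsg) as [sv' [Hsv' Lv']].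
  pose proof (inv_slope u p sg su su' Hsg' Lu Lu' Hsu) as E1.
  pose proof (inv_slope v p sg sv sv' Hsg' Lv Lv' Hsv) as E2.
  assert (L1 := LinG_comp sg _ _ p su' sv' Lu' Lv' Hsv').
  assert (L2 := LinG_comp sg _ _ p sv (su' * sv') Lv L1 ltac:(apply Rmult_gt_0_compat; auto)).
  assert (L3 := LinG_comp sg _ _ p su (sv * (su' * sv')) Lu L2
     ltac:(repeat apply Rmult_gt_0_compat; auto)).
  replace (su * (sv * (su' * sv'))) with ((su' * su) * (sv' * sv)) in L3 by ring.
  rewrite E1, E2, Rmult_1_l in L3.
  eapply LinG_ext; [|exact L3]. intros x Hx. simpl. rewrite Ph_comm; auto.
Qed.

Lemma comm_fix : forall u v p, in01 p -> phi u p = p -> phi v p = p -> phi (comm u v) p = p.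
Proof. intros u v p Hp Hu Hv. rewrite Ph_comm by auto.
  rewrite (Ph_fix_inv v), (Ph_fix_inv u), Hv, Hu; auto. Qed.

Definition locid (u : G) (p : R) : Prop :=
  exists e, e > 0 /\ forall x, in01 x -> p - e <= x <= p + e -> phi u x = x.

Lemma comm_locid : forall u v p, in01 p -> phi u p = p -> phi v p = p -> locid (comm u v) p.
Proof.
  intros u v p Hp Hu Hv.
  assert (R1 : exists e1, e1 > 0 /\ forall x, in01 x -> p <= x <= p + e1 -> phi (comm u v) x = x).
  { destruct (Rlt_or_le p 1) as [Hp1|Hp1].
    - destruct (comm_germ u v p 1 Hp Hu Hv (or_introl (conj eq_refl Hp1))) as [e [He H]].
      exists e; split; auto. intros x Hx Hr. destruct (H x ltac:(lra)) as [_ ->]. ring.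
    - exists 1; split; [lra|]. intros x Hx Hr. unfold in01 in *. assert (x = p) by lra. subst.
      apply comm_fix; auto. }
  assert (R2 : exists e2, e2 > 0 /\ forall x, in01 x -> p - e2 <= x <= p -> phi (comm u v) x = x).
  { destruct (Rlt_or_le 0 p) as [Hp1|Hp1].
    - destruct (comm_germ u v p (-1) Hp Hu Hv (or_intror (conj eq_refl Hp1))) as [e [He H]].
      exists e; split; auto. intros x Hx Hr. destruct (H x ltac:(lra)) as [_ ->]. ring.
    - exists 1; split; [lra|]. intros x Hx Hr. unfold in01 in *. assert (x = p) by lra. subst.
      apply comm_fix; auto. }
  destruct R1 as [e1 [He1 R1]], R2 as [e2 [He2 R2]].
  exists (Rmin e1 e2). split. apply Rmin_pos; auto.
  intros x Hx Hr. pose proof (Rmin_l e1 e2). pose proof (Rmin_r e1 e2).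
  destruct (Rle_or_lt p x). apply R1; auto; lra. apply R2; auto; lra.
Qed.

End PP.

Open Scope R_scope.

Lemma okj_of_neq : forall l l', l' <> linv l -> okj l l'.
Proof. intros [a b] [c d] H; unfold okj, linv in *; simpl in *; intros [E1 E2]; subst; apply H; destruct b, d; simpl; congruence. Qed.
Lemma neq_of_okj : forall l l', okj l l' -> l' <> linv l.
Proof. intros [a b] [c d] H E; unfold okj, linv in *; simpl in *; injection E as -> ->; apply H; destruct b; simpl; split; congruence. Qed.

Lemma lin_two_fix : forall (h : R -> R) c d A B y1 y2 z,
  (forall x, A <= x <= B -> h x = c * x + d) -> A <= y1 -> y1 < y2 -> y2 <= B ->
  h y1 = y1 -> h y2 = y2 -> A <= z <= B -> h z = z.
Proof.
  intros h c d A B y1 y2 z H Hy1 H12 Hy2 F1 F2 Hz.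
  rewrite H in F1, F2 by lra. rewrite H by lra.
  assert (Hc : (c - 1) * (y2 - y1) = 0) by lra.
  apply Rmult_integral in Hc. destruct Hc as [Hc|Hc]; [|lra].
  assert (c = 1) by lra. subst c. assert (d = 0) by lra. subst d. ring.
Qed.

Lemma lub_approx : forall (E : R -> Prop) p e, is_lub E p -> ~ E p -> e > 0 ->
  exists y, E y /\ p - e < y < p.
Proof.
  intros E p e [Hub Hl] Hn He. apply NNPP. intro H.
  assert (is_upper_bound E (p - e)).
  { intros y Hy. destruct (Rle_or_lt y (p - e)); auto. exfalso. apply H. exists y. split; auto.
    split; auto. destruct (Rle_lt_or_eq_dec y p (Hub y Hy)); auto. subst; contradiction. }
  specialize (Hl _ H0). lra.
Qed.

Section PW.
Variable G : Grp.
Variable phi : G -> R -> R.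
Hypothesis HPL : forall g, is_PL_homeo (phi g).
Hypothesis Hinj : forall g g', (forall x, in01 x -> phi g x = phi g' x) -> g = g'.
Hypothesis Hmul : forall g g' x, in01 x -> phi (gmul G g g') x = phi g (phi g' x).
Variables a b : G.

Definition Fx (x : R) : Prop := in01 x /\ phi a x = x /\ phi b x = x.
Definition Comp (p q : R) : Prop := p < q /\ Fx p /\ Fx q /\ forall y, p < y < q -> ~ Fx y.

Lemma letter_fix : forall l x, Fx x -> phi (gletter G a b l) x = x.
Proof. intros [t e] x [Hx [Ha Hb]]. unfold gletter; simpl. destruct t, e; auto; apply Ph_fix_inv; auto. Qed.
Lemma word_fix : forall w x, Fx x -> phi (geval G a b w) x = x.
Proof. induction w as [|l w IH]; intros x Hx; simpl. apply Ph_one; auto. destruct Hx; auto.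
  rewrite Hmul by (destruct Hx; auto). rewrite IH, letter_fix; auto. Qed.

Lemma comp_in : forall p q y, Comp p q -> p < y < q -> in01 y.
Proof. intros p q y [_ [[Hp _] [[Hq _] _]]] Hy. unfold in01 in *; lra. Qed.
Lemma comp_pres : forall u p q y, Comp p q -> phi u p = p -> phi u q = q -> p < y < q ->
  p < phi u y < q.
Proof. intros u p q y Hc Hup Huq Hy. pose proof (comp_in p q y Hc Hy) as Hiy.
  destruct Hc as [_ [[Hp _] [[Hq _] _]]]. split.
  rewrite <- Hup at 1. apply Ph_lt; auto; lra. rewrite <- Huq. apply Ph_lt; auto; lra. Qed.
Lemma word_pres : forall w p q y, Comp p q -> p < y < q -> p < phi (geval G a b w) y < q.
Proof. intros w p q y Hc Hy. apply comp_pres; auto; apply word_fix; apply Hc. Qed.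

Lemma lcons : forall l k, reduced k -> exists k', reduced k' /\
  geval G a b k' = gmul G (gletter G a b l) (geval G a b k).
Proof.
  intros l [|l' k] Hk.
  - exists [l]. simpl. auto.
  - destruct (classic (l' = linv l)) as [E|E].
    + exists k. split. eapply reduced_cons; eauto. subst. simpl. rewrite gletter_linv, gmulA, g_mulVr, gmul1; auto.
    + exists (l :: l' :: k). split; auto. simpl. split; auto. apply okj_of_neq; auto.
Qed.

Lemma sup_fix : forall (E : R -> Prop) u s, (forall t, E t -> in01 t) ->
  (forall t, E t -> E (phi u t)) -> (forall t, E t -> E (phi (ginv G u) t)) ->
  is_lub E s -> in01 s -> phi u s = s.
Proof.
  intros E u s Hin H1 H2 [Hub Hl] Hs.
  assert (A : s <= phi u s).
  { apply Hl. intros t Ht. rewrite <- (Ph_invr G phi HPL Hmul u t) by auto.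
    apply Ph_le; auto; try (apply Ph_in; auto). }
  assert (B : s <= phi (ginv G u) s).
  { apply Hl. intros t Ht. rewrite <- (Ph_invl G phi HPL Hmul u t) by auto.
    apply Ph_le; auto; try (apply Ph_in; auto). }
  apply (Ph_le G phi HPL u) in B; auto. rewrite Ph_invr in B; auto. lra. apply Ph_in; auto.
Qed.

Lemma orbit : forall p q y T, Comp p q -> p < y < q -> T < q ->
  exists k, reduced k /\ T < phi (geval G a b k) y.
Proof.
  intros p q y T Hc Hy HT. apply NNPP. intro H.
  assert (Hb : forall k, reduced k -> phi (geval G a b k) y <= T).
  { intros k Hk. destruct (Rle_or_lt (phi (geval G a b k) y) T); auto. exfalso; apply H; eauto. }
  set (E := fun t => exists k, reduced k /\ t = phi (geval G a b k) y).
  assert (HEin : forall t, E t -> p < t < q) by (intros t [k [_ ->]]; apply word_pres; auto).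
  assert (HE0 : E y) by (exists []; split; simpl; auto; rewrite Ph_one; auto; eapply comp_in; eauto).
  destruct (completeness E) as [s Hs].
  { exists T. intros t [k [Hk ->]]. auto. }
  { exists y; auto. }
  assert (Hys : y <= s) by (apply Hs; auto).
  assert (HsT : s <= T) by (apply Hs; intros t [k [Hk ->]]; auto).
  assert (HEl : forall l t, E t -> E (phi (gletter G a b l) t)).
  { intros l t [k [Hk ->]]. destruct (lcons l k Hk) as [k' [Hk' Hv]]. exists k'. split; auto.
    rewrite Hv, Hmul; auto. eapply comp_in; eauto. }
  assert (Hsin : in01 s) by (eapply comp_in; eauto; lra).
  assert (HEi : forall t, E t -> in01 t) by (intros t Ht; eapply comp_in; eauto).
  assert (Fx s).
  { split; auto. split.
    - apply (sup_fix E a s HEi (HEl (true,true)) (HEl (true,false)) Hs Hsin).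
    - apply (sup_fix E b s HEi (HEl (false,true)) (HEl (false,false)) Hs Hsin). }
  destruct Hc as [_ [_ [_ Hno]]]. apply (Hno s); auto. lra.
Qed.

End PW.

Open Scope R_scope.

Definition is_glb (E : R -> Prop) (q : R) : Prop :=
  (forall y, E y -> q <= y) /\ (forall c, (forall y, E y -> c <= y) -> c <= q).

Lemma glb_exists : forall (E : R -> Prop) x0 x1, E x1 -> (forall y, E y -> x0 <= y) -> exists q, is_glb E q.
Proof.
  intros E x0 x1 H1 H0. destruct (completeness (fun t => E (- t))) as [m [Hu Hl]].
  { exists (- x0). intros t Ht. specialize (H0 _ Ht). lra. }
  { exists (- x1). rewrite Ropp_involutive; auto. }
  exists (- m). split.
  - intros y Hy. assert (- y <= m) by (apply Hu; rewrite Ropp_involutive; auto). lra.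
  - intros c Hc. assert (m <= - c). { apply Hl. intros t Ht. specialize (Hc _ Ht). lra. } lra.
Qed.

Lemma glb_approx : forall (E : R -> Prop) q e, is_glb E q -> ~ E q -> e > 0 ->
  exists y, E y /\ q < y < q + e.
Proof.
  intros E q e [Hlb Hg] Hn He. apply NNPP. intro H.
  assert (forall y, E y -> q + e <= y).
  { intros y Hy. destruct (Rle_or_lt (q + e) y); auto. exfalso. apply H. exists y. split; auto.
    split; auto. destruct (Rle_lt_or_eq_dec q y (Hlb y Hy)); auto. subst; contradiction. }
  specialize (Hg _ H0). lra.
Qed.

Lemma fix_left_limit : forall h (E : R -> Prop) p, is_PL_homeo h -> is_lub E p -> ~ E p ->
  0 < p <= 1 -> (forall y, E y -> h y = y) -> h p = p.
Proof.
  intros h E p Hh Hl Hn Hp HE. destruct Hh as [H0 [H1 [_ [_ [n [xs [X0 [Xn [Xinc Xlin]]]]]]]]].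
  destruct (find_piece_l xs n p ltac:(lra) ltac:(lra)) as [i [Hi Hpi]].
  destruct (Xlin i Hi) as [c [d Hcd]].
  destruct (lub_approx E p (p - xs i) Hl Hn ltac:(lra)) as [y2 [Ey2 Hy2]].
  destruct (lub_approx E p (p - y2) Hl Hn ltac:(lra)) as [y1 [Ey1 Hy1]].
  eapply (lin_two_fix h c d (xs i) (xs (S i)) y2 y1 p); eauto; lra.
Qed.

Lemma fix_right_limit : forall h (E : R -> Prop) q, is_PL_homeo h -> is_glb E q -> ~ E q ->
  0 <= q < 1 -> (forall y, E y -> h y = y) -> h q = q.
Proof.
  intros h E q Hh Hl Hn Hq HE. destruct Hh as [H0 [H1 [_ [_ [n [xs [X0 [Xn [Xinc Xlin]]]]]]]]].
  destruct (find_piece_r xs n q ltac:(lra) ltac:(lra)) as [i [Hi Hpi]].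
  destruct (Xlin i Hi) as [c [d Hcd]].
  destruct (glb_approx E q (xs (S i) - q) Hl Hn ltac:(lra)) as [y1 [Ey1 Hy1]].
  destruct (glb_approx E q (y1 - q) Hl Hn ltac:(lra)) as [y2 [Ey2 Hy2]].
  eapply (lin_two_fix h c d (xs i) (xs (S i)) y2 y1 q); eauto; lra.
Qed.

Section PC.
Variable G : Grp.
Variable phi : G -> R -> R.
Hypothesis HPL : forall g, is_PL_homeo (phi g).
Hypothesis Hinj : forall g g', (forall x, in01 x -> phi g x = phi g' x) -> g = g'.
Hypothesis Hmul : forall g g' x, in01 x -> phi (gmul G g g') x = phi g (phi g' x).
Variables a b : G.

Lemma Fx0 : Fx G phi a b 0.
Proof. split. unfold in01; lra. destruct (HPL a) as [Ha _], (HPL b) as [Hb _]. auto. Qed.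
Lemma Fx1 : Fx G phi a b 1.
Proof. split. unfold in01; lra. destruct (HPL a) as [_ [Ha _]], (HPL b) as [_ [Hb _]]. auto. Qed.

Lemma comp_exists : forall x, in01 x -> ~ Fx G phi a b x ->
  exists p q, Comp G phi a b p q /\ p < x < q.
Proof.
  intros x Hx Hnx.
  set (E := fun y => Fx G phi a b y /\ y <= x).
  destruct (completeness E) as [p Hp].
  { exists x. intros y [_ Hy]; auto. }
  { exists 0. split. apply Fx0. unfold in01 in Hx; lra. }
  assert (Hp0 : 0 <= p) by (apply Hp; split; [apply Fx0| unfold in01 in Hx; lra]).
  assert (Hpx : p <= x) by (apply Hp; intros y [_ Hy]; auto).
  assert (HFp : Fx G phi a b p).
  { destruct (classic (E p)) as [Ep|Ep]. apply Ep.
    assert (p > 0). { destruct (Rle_lt_or_eq_dec 0 p Hp0); auto. subst p. exfalso. apply Ep.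
      split. apply Fx0. unfold in01 in Hx; lra. }
    split. unfold in01 in *; lra. unfold in01 in Hx.
    split; eapply fix_left_limit; eauto; try lra; intros y [[_ [Ha Hb]] _]; auto. }
  set (E' := fun y => Fx G phi a b y /\ x <= y).
  destruct (glb_exists E' x 1) as [q Hq].
  { split. apply Fx1. unfold in01 in Hx; lra. }
  { intros y [_ Hy]; auto. }
  assert (Hq1 : q <= 1) by (apply Hq; split; [apply Fx1| unfold in01 in Hx; lra]).
  assert (Hxq : x <= q) by (apply Hq; intros y [_ Hy]; auto).
  assert (HFq : Fx G phi a b q).
  { destruct (classic (E' q)) as [Eq|Eq]. apply Eq.
    assert (q < 1). { destruct (Rle_lt_or_eq_dec q 1 Hq1); auto. subst q. exfalso. apply Eq.
      split. apply Fx1. unfold in01 in Hx; lra. }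
    split. unfold in01 in *; lra. unfold in01 in Hx.
    split; eapply fix_right_limit; eauto; try lra; intros y [[_ [Ha Hb]] _]; auto. }
  assert (p < x). { destruct (Rle_lt_or_eq_dec p x Hpx); auto. subst; contradiction. }
  assert (x < q). { destruct (Rle_lt_or_eq_dec x q Hxq); auto. subst; contradiction. }
  exists p, q. split; [|lra]. split; [lra|]. split; auto. split; auto.
  intros y Hy HFy. destruct (Rle_or_lt y x).
  - assert (y <= p) by (apply Hp; split; auto). lra.
  - assert (q <= y) by (apply Hq; split; auto; lra). lra.
Qed.

End PC.

Open Scope R_scope.

Lemma rep_red : forall l n, reduced (repeat l n).
Proof. intros l n; induction n as [|n IH]; simpl; auto. destruct n; simpl; auto.
  split; auto. apply okj_refl. Qed.
Lemma hd_rep : forall l n, hd d0 (repeat l (S n)) = l.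
Proof. reflexivity. Qed.
Lemma last_rep : forall l n, last (repeat l (S n)) d0 = l.
Proof. intros l n. simpl repeat. rewrite repeat_cons, last_last. reflexivity. Qed.

Lemma pre_split : forall m k, exists i k1, k = repeat m i ++ k1 /\ (k1 <> [] -> hd d0 k1 <> m).
Proof.
  intros m k; induction k as [|x k IH].
  - exists O, []. split; auto.
  - destruct (classic (x = m)) as [E|E].
    + destruct IH as [i [k1 [H1 H2]]]. exists (S i), k1. subst. simpl. split; auto.
    + exists O, (x :: k). simpl. split; auto.
Qed.

Lemma suf_split : forall m k, exists k2 j, k = k2 ++ repeat m j /\ (k2 <> [] -> last k2 d0 <> m).
Proof.
  intros m k; induction k as [|x k IH] using rev_ind.
  - exists [], O. split; auto.
  - destruct (classic (x = m)) as [E|E].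
    + destruct IH as [k2 [j [H1 H2]]]. exists k2, (S j). subst x. split; auto.
      rewrite H1, <- app_assoc. f_equal. simpl. rewrite repeat_cons. reflexivity.
    + exists (k ++ [x]), O. simpl. rewrite app_nil_r. split; auto. rewrite last_last. auto.
Qed.

Lemma split3 : forall m m' k, exists i k2 j, k = repeat m i ++ k2 ++ repeat m' j /\
  (k2 <> [] -> hd d0 k2 <> m) /\ (k2 <> [] -> last k2 d0 <> m') /\
  (i <= length k)%nat /\ (j <= length k)%nat.
Proof.
  intros m m' k. destruct (pre_split m k) as [i [k1 [H1 H2]]].
  destruct (suf_split m' k1) as [k2 [j [H3 H4]]].
  exists i, k2, j. subst k1. split; auto. split; [|split; auto].
  - intros Hne. rewrite <- (hd_app k2 (repeat m' j) Hne). apply H2. intro E. apply app_eq_nil in E. tauto.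
  - rewrite H1, !length_app, !repeat_length. split; lia.
Qed.

Definition lamb_ok (x1 xn lam : L) : bool := okb lam x1 && okb lam (linv xn).
Lemma lamb_ex : forall x1 xn, exists lam, lamb_ok x1 xn lam = true.
Proof.
  intros [[|] [|]] [[|] [|]];
  match goal with |- exists t, lamb_ok ?x ?y t = true =>
    let H := fresh in
    assert (H : existsb (fun t => lamb_ok x y t) allL = true) by reflexivity;
    apply existsb_exists in H; destruct H as [t [_ H]]; exists t; exact H end.
Qed.
Definition rho_ok (x1 xn l' rho : L) : bool := okb (linv rho) x1 && okb xn rho && okb rho l'.
Lemma rho_ex : forall x1 xn l', exists rho, rho_ok x1 xn l' rho = true.
Proof.
  intros [[|] [|]] [[|] [|]] [[|] [|]];
  match goal with |- exists t, rho_ok ?x ?y ?z t = true =>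
    let H := fresh in
    assert (H : existsb (fun t => rho_ok x y z t) allL = true) by reflexivity;
    apply existsb_exists in H; destruct H as [t [_ H]]; exists t; exact H end.
Qed.

Lemma okj_difftype : forall l l', fst l <> fst l' -> okj l l'.
Proof. intros [a b] [c d] H; unfold okj; simpl in *; tauto. Qed.

Section PR.
Variable G : Grp.
Variable phi : G -> R -> R.
Hypothesis HPL : forall g, is_PL_homeo (phi g).
Hypothesis Hinj : forall g g', (forall x, in01 x -> phi g x = phi g' x) -> g = g'.
Hypothesis Hmul : forall g g' x, in01 x -> phi (gmul G g g') x = phi g (phi g' x).
Variables a b : G.
Notation ev := (geval G a b).

Lemma ev_rep_add : forall l n m, ev (repeat l (n + m)) = gmul G (ev (repeat l n)) (ev (repeat l m)).
Proof. intros; rewrite repeat_app, geval_app; auto. Qed.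
Lemma ev_rep_cancel_gen : forall l n r, ev (repeat l n ++ repeat (linv l) n ++ r) = ev r.
Proof.
  intros l n; induction n as [|n IH]; intros r; simpl; auto.
  replace (linv l :: repeat (linv l) n ++ r) with (repeat (linv l) n ++ linv l :: r)
    by (rewrite app_comm_cons, repeat_cons, <- app_assoc; reflexivity).
  rewrite IH. simpl. rewrite gletter_linv, gmulA, g_mulVr, gmul1. auto.
Qed.
Lemma ev_rep_cancel : forall l n, ev (repeat l n ++ repeat (linv l) n) = gone G.
Proof. intros. rewrite <- (app_nil_r (repeat (linv l) n)), ev_rep_cancel_gen. reflexivity. Qed.

Lemma rep_ge : forall l n y, in01 y -> y <= phi (gletter G a b l) y -> y <= phi (ev (repeat l n)) y.
Proof.
  intros l n y Hy H. induction n as [|n IH]. simpl. rewrite Ph_one; auto; lra.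
  replace (repeat l (S n)) with (repeat l n ++ [l]) by (rewrite <- repeat_cons; reflexivity). rewrite geval_app. simpl. rewrite g_mul1r, Hmul by auto.
  apply Rle_trans with (phi (ev (repeat l n)) y); auto. apply Ph_le; auto. apply Ph_in; auto.
Qed.

Definition supp_in (A : G) (p q lo hi : R) : Prop :=
  phi A p = p /\ phi A q = q /\ (forall x, p < x < q -> (x < lo \/ hi < x) -> phi A x = x) /\
  (forall x, lo <= x <= hi -> lo <= phi A x <= hi).

Lemma supp_in_inv : forall A p q lo hi, 0 <= p -> p < lo -> lo <= hi -> hi < q -> q <= 1 ->
  supp_in A p q lo hi -> supp_in (ginv G A) p q lo hi.
Proof.
  intros A p q lo hi H0 H1 H2 H3 H4 [Hp [Hq [Hout Hin]]].
  assert (Hi : forall x, p <= x <= q -> in01 x) by (intros; unfold in01; lra).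
  assert (Hp' : phi (ginv G A) p = p) by (apply Ph_fix_inv; auto; try apply Hi; lra).
  assert (Hq' : phi (ginv G A) q = q) by (apply Ph_fix_inv; auto; try apply Hi; lra).
  assert (Hpres : forall x, p < x < q -> p < phi (ginv G A) x < q).
  { intros x Hx. split. rewrite <- Hp' at 1. apply Ph_lt; auto; try apply Hi; lra.
    rewrite <- Hq'. apply Ph_lt; auto; try apply Hi; lra. }
  split; auto. split; auto. split.
  - intros x Hx Ho. apply Ph_fix_inv; auto. apply Hi; lra.
  - intros x Hx. destruct (Rlt_or_le (phi (ginv G A) x) lo) as [L|L].
    + exfalso. pose proof (Hpres x ltac:(lra)).
      pose proof (Hout _ H (or_introl L)) as E1. rewrite Ph_invr in E1 by (solve [auto | apply Hi; lra]). lra.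
    + destruct (Rlt_or_le hi (phi (ginv G A) x)) as [L2|L2]; [|lra].
      exfalso. pose proof (Hpres x ltac:(lra)).
      pose proof (Hout _ H (or_intror L2)) as E1. rewrite Ph_invr in E1 by (solve [auto | apply Hi; lra]). lra.
Qed.

Lemma supp_in_conj : forall A Z p q lo hi, 0 <= p -> p < lo -> lo <= hi -> hi < q -> q <= 1 ->
  phi Z p = p -> phi Z q = q -> supp_in A p q lo hi ->
  supp_in (gmul G Z (gmul G A (ginv G Z))) p q (phi Z lo) (phi Z hi).
Proof.
  intros A Z p q lo hi H0 H1 H2 H3 H4 HZp HZq [Hp [Hq [Hout Hin]]].
  assert (Hi : forall x, p <= x <= q -> in01 x) by (intros; unfold in01; lra).
  assert (HZp' : phi (ginv G Z) p = p) by (apply Ph_fix_inv; auto; try apply Hi; lra).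
  assert (HZq' : phi (ginv G Z) q = q) by (apply Ph_fix_inv; auto; try apply Hi; lra).
  assert (Hv : forall x, p <= x <= q -> phi (gmul G Z (gmul G A (ginv G Z))) x = phi Z (phi A (phi (ginv G Z) x))).
  { intros x Hx. rewrite !Hmul; auto; repeat apply Ph_in; apply Hi; auto. }
  assert (Hmono : forall U x y, p <= x <= q -> p <= y <= q -> x <= y -> phi U x <= phi U y).
  { intros U x y Hx Hy Hxy. apply Ph_le; auto; apply Hi; auto. }
  assert (Hsmono : forall U x y, p <= x <= q -> p <= y <= q -> x < y -> phi U x < phi U y).
  { intros U x y Hx Hy Hxy. apply Ph_lt; auto; apply Hi; auto. }
  assert (HZL : p < phi Z lo). { rewrite <- HZp at 1. apply Hsmono; lra. }
  assert (HZH : phi Z hi < q). { rewrite <- HZq. apply Hsmono; lra. }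
  assert (HZLH : phi Z lo <= phi Z hi) by (apply Hmono; lra).
  assert (HZi : forall x, p < x < q -> p < phi (ginv G Z) x < q).
  { intros x Hx. split. rewrite <- HZp' at 1. apply Hsmono; lra. rewrite <- HZq'. apply Hsmono; lra. }
  assert (HlL : phi (ginv G Z) (phi Z lo) = lo) by (apply Ph_invl; auto; try apply Hi; lra).
  assert (HhH : phi (ginv G Z) (phi Z hi) = hi) by (apply Ph_invl; auto; try apply Hi; lra).
  split. rewrite Hv, HZp', Hp, HZp; auto; lra.
  split. rewrite Hv, HZq', Hq, HZq; auto; lra.
  split.
  - intros x Hx Ho. rewrite Hv by lra. pose proof (HZi x Hx) as Hzx.
    rewrite Hout; auto. apply Ph_invr; auto. apply Hi; lra.
    destruct Ho as [Ho|Ho].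
    + left. rewrite <- HlL. apply Hsmono; lra.
    + right. rewrite <- HhH. apply Hsmono; lra.
  - intros x Hx. rewrite Hv by lra.
    assert (Hlo : lo <= phi (ginv G Z) x) by (rewrite <- HlL at 1; apply Hmono; lra).
    assert (Hhi : phi (ginv G Z) x <= hi) by (rewrite <- HhH; apply Hmono; lra).
    destruct (Hin _ (conj Hlo Hhi)) as [A1 A2].
    split; apply Hmono; lra.
Qed.

Lemma comm_disj : forall A B p q l1 h1 l2 h2, 0 <= p -> p < l1 -> l1 <= h1 -> h1 < l2 -> l2 <= h2 -> h2 < q -> q <= 1 ->
  supp_in A p q l1 h1 -> supp_in B p q l2 h2 ->
  forall x, p < x < q -> phi (comm G A B) x = x.
Proof.
  intros A B p q l1 h1 l2 h2 H0 Ha Hb Hc Hd He Hf SA SB x Hx.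
  assert (Hi : forall x, p <= x <= q -> in01 x) by (intros; unfold in01; lra).
  pose proof (supp_in_inv A p q l1 h1 H0 Ha Hb ltac:(lra) Hf SA) as SA'.
  pose proof (supp_in_inv B p q l2 h2 H0 ltac:(lra) Hd He Hf SB) as SB'.
  destruct SA as [Ap [Aq [Ao Ai]]], SB as [Bp [Bq [Bo Bi]]], SA' as [Ap' [Aq' [Ao' Ai']]], SB' as [Bp' [Bq' [Bo' Bi']]].
  rewrite Ph_comm by (solve [auto | apply Hi; lra]).
  assert (HBx : p < phi (ginv G B) x < q).
  { split. rewrite <- Bp' at 1. apply Ph_lt; auto; try apply Hi; lra.
    rewrite <- Bq'. apply Ph_lt; auto; try apply Hi; lra. }
  destruct (Rle_or_lt l2 x) as [X1|X1]; [destruct (Rle_or_lt x h2) as [X2|X2]|].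
  - destruct (Bi' x ltac:(lra)) as [Y1 Y2].
    assert (Z1 : h1 < phi (ginv G B) x) by lra.
    rewrite (Ao' (phi (ginv G B) x) HBx (or_intror Z1)).
    rewrite Ph_invr by (solve [auto | apply Hi; lra]).
    assert (Z2 : h1 < x) by lra. apply (Ao x Hx (or_intror Z2)).
  - assert (Z2 : h1 < x) by lra.
    rewrite (Bo' x Hx (or_intror X2)).
    rewrite (Ao' x Hx (or_intror Z2)), (Bo x Hx (or_intror X2)), (Ao x Hx (or_intror Z2)). auto.
  - rewrite (Bo' x Hx (or_introl X1)).
    destruct (Rle_or_lt l1 x) as [W1|W1]; [destruct (Rle_or_lt x h1) as [W2|W2]|].
    + destruct (Ai' x ltac:(lra)).
      assert (HAx : p < phi (ginv G A) x < q) by lra.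
      assert (Z3 : phi (ginv G A) x < l2) by lra.
      rewrite (Bo _ HAx (or_introl Z3)). apply Ph_invr; solve [auto | apply Hi; lra].
    + rewrite (Ao' x Hx (or_intror W2)), (Bo x Hx (or_introl X1)), (Ao x Hx (or_intror W2)). auto.
    + rewrite (Ao' x Hx (or_introl W1)), (Bo x Hx (or_introl X1)), (Ao x Hx (or_introl W1)). auto.
Qed.
End PR.

Open Scope R_scope.

Section PS.
Variable G : Grp.
Variable phi : G -> R -> R.
Hypothesis HPL : forall g, is_PL_homeo (phi g).
Hypothesis Hinj : forall g g', (forall x, in01 x -> phi g x = phi g' x) -> g = g'.
Hypothesis Hmul : forall g g' x, in01 x -> phi (gmul G g g') x = phi g (phi g' x).
Variables a b : G.
Notation ev := (geval G a b).
Notation Fx := (Fx G phi a b).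
Notation Comp := (Comp G phi a b).
Let cpres := comp_pres G phi HPL a b.
Let wfix := word_fix G phi HPL Hmul a b.
Let wpres := word_pres G phi HPL Hmul a b.
Let lfix := letter_fix G phi HPL Hmul a b.
Let cin := comp_in G phi a b.
Let invr := Ph_invr G phi HPL Hmul.
Let invl := Ph_invl G phi HPL Hmul.
Let pin := Ph_in G phi HPL.
Let ple := Ph_le G phi HPL.
Let plt := Ph_lt G phi HPL.
Let fixinv := Ph_fix_inv G phi HPL Hmul.
Let pone := Ph_one G phi HPL Hmul.

Lemma gletter_neg : forall t, gletter G a b (t, false) = ginv G (gletter G a b (t, true)).
Proof. intros [|]; reflexivity. Qed.

Lemma letter_pres : forall l p q y, Comp p q -> p < y < q -> p < phi (gletter G a b l) y < q.
Proof. intros l p q y Hc Hy. apply cpres; auto; apply lfix; auto; apply Hc. Qed.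

Lemma choose_sign : forall t y, in01 y -> exists s, y <= phi (gletter G a b (t, s)) y.
Proof.
  intros t y Hy. destruct (Rle_or_lt y (phi (gletter G a b (t,true)) y)) as [H|H].
  - exists true; auto.
  - exists false. rewrite gletter_neg. apply (Ph_inv_ge G phi HPL Hmul); auto. lra.
Qed.

Lemma choose_sign_germ : forall t q, 0 < q -> Fx q -> exists s e, e > 0 /\
  forall y, q - e <= y <= q -> y <= phi (gletter G a b (t, s)) y.
Proof.
  intros t q Hq HF.
  assert (Hu : phi (gletter G a b (t,true)) q = q) by (apply lfix; auto).
  destruct (Ph_germ G phi HPL (gletter G a b (t,true)) q (-1) (proj1 HF) Hu (or_intror (conj eq_refl Hq))) as [s [Hs [e [He H]]]].
  destruct (Rle_or_lt s 1) as [Hs1|Hs1].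
  - exists true, e. split; auto. intros y Hy. destruct (H y ltac:(lra)) as [_ ->]. nra.
  - exists false, e. split; auto. intros y Hy. destruct (H y ltac:(lra)) as [Hin Hv].
    rewrite gletter_neg. apply (Ph_inv_ge G phi HPL Hmul); auto. rewrite Hv. nra.
Qed.

Lemma conj_id : forall A Z p q, Comp p q -> phi Z p = p -> phi Z q = q ->
  (forall x, p < x < q -> phi A x = x) ->
  forall x, p < x < q -> phi (gmul G Z (gmul G A (ginv G Z))) x = x.
Proof.
  intros A Z p q Hc HZp HZq HA x Hx. pose proof (cin p q x Hc Hx) as Hix.
  rewrite !Hmul by (repeat apply pin; auto).
  assert (HZp' : phi (ginv G Z) p = p) by (apply fixinv; auto; apply Hc).
  assert (HZq' : phi (ginv G Z) q = q) by (apply fixinv; auto; apply Hc).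
  rewrite HA. apply invr; auto. apply cpres; auto.
Qed.

Lemma comm_id : forall A B p q, Comp p q ->
  (forall x, p < x < q -> phi A x = x) -> (forall x, p < x < q -> phi B x = x) ->
  forall x, p < x < q -> phi (comm G A B) x = x.
Proof.
  intros A B p q Hc HA HB x Hx. pose proof (cin p q x Hc Hx) as Hix.
  rewrite (Ph_comm G phi Hmul) by auto.
  rewrite (Ph_fix_inv G phi HPL Hmul B x Hix (HB x Hx)).
  rewrite (Ph_fix_inv G phi HPL Hmul A x Hix (HA x Hx)). rewrite HB, HA; auto.
Qed.

Definition CF (u : G) : Prop := forall p, Fx p -> locid G phi u p.


Definition v4 : list L := [(true,true);(false,true);(true,false);(false,false)].

Lemma stage : forall W p q, W <> [] -> reduced W -> CF (ev W) -> Comp p q ->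
  exists W2, W2 <> [] /\ reduced W2 /\ CF (ev W2) /\ (forall x, p < x < q -> phi (ev W2) x = x) /\
  (forall p' q', Comp p' q' -> (forall x, p' < x < q' -> phi (ev W) x = x) ->
     forall x, p' < x < q' -> phi (ev W2) x = x).
Proof.
  intros W p q HW HrW HCF Hc.
  pose proof Hc as [Hpq [HFp [HFq Hno]]].
  assert (Hp0 : 0 <= p) by (destruct HFp as [[? ?] _]; auto).
  assert (Hq1 : q <= 1) by (destruct HFq as [[? ?] _]; auto).
  assert (Hi : forall x, p <= x <= q -> in01 x) by (intros; unfold in01; lra).
  destruct (cyc_red (length W) W (le_n _) HrW HW) as [c [W' [HWe [HW' [HrW' Hcy]]]]].
  set (C := ev c). set (U := ev W').
  assert (HevW : ev W = gmul G C (gmul G U (ginv G C))).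
  { rewrite HWe, !geval_app, geval_winv. reflexivity. }
  assert (HU : forall x, in01 x -> phi U x = phi (ginv G C) (phi (ev W) (phi C x))).
  { intros x Hx. rewrite HevW. rewrite !Hmul by (repeat apply pin; auto).
    rewrite (invl C x Hx). rewrite (invl C (phi U x) (pin U x Hx)). reflexivity. }
  assert (HCfix : forall r, Fx r -> phi C r = r) by (intros; apply wfix; auto).
  assert (HCifix : forall r, Fx r -> phi (ginv G C) r = r) by (intros r Hr; apply fixinv; auto; apply Hr).
  assert (HCpres : forall p' q' x, Comp p' q' -> p' < x < q' -> p' < phi C x < q') by (intros; apply wpres; auto).
  assert (HCipres : forall p' q' x, Comp p' q' -> p' < x < q' -> p' < phi (ginv G C) x < q').
  { intros p' q' x Hc' Hx. apply cpres; auto; apply HCifix; apply Hc'. }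
  destruct (HCF p HFp) as [ep [Hep Hlp]].
  destruct (HCF q HFq) as [eq [Heq Hlq]].
  set (e' := Rmin (Rmin ep eq) ((q - p) / 2)).
  assert (He'1 : e' <= ep) by (unfold e'; pose proof (Rmin_l (Rmin ep eq) ((q-p)/2)); pose proof (Rmin_l ep eq); lra).
  assert (He'2 : e' <= eq) by (unfold e'; pose proof (Rmin_l (Rmin ep eq) ((q-p)/2)); pose proof (Rmin_r ep eq); lra).
  assert (He'3 : e' <= (q - p) / 2) by (unfold e'; apply Rmin_r).
  assert (He'0 : e' > 0) by (unfold e'; repeat apply Rmin_pos; lra).
  assert (HW1 : forall x, p <= x <= p + e' -> phi (ev W) x = x) by (intros; apply Hlp; [apply Hi|]; lra).
  assert (HW2 : forall x, q - e' <= x <= q -> phi (ev W) x = x) by (intros; apply Hlq; [apply Hi|]; lra).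
  set (y0 := phi (ginv G C) (p + e')). set (y1 := phi (ginv G C) (q - e')).
  assert (Hy0 : p < y0 < q) by (apply HCipres; auto; lra).
  assert (Hy1 : p < y1 < q) by (apply HCipres; auto; lra).
  assert (Hy01 : y0 <= y1) by (apply ple; try apply Hi; lra).
  assert (HUfix : forall x, p < x < q -> (x <= y0 \/ y1 <= x) -> phi U x = x).
  { intros x Hx Hor. rewrite HU by (apply Hi; lra).
    pose proof (HCpres p q x Hc Hx) as HCx.
    destruct Hor as [Ho|Ho].
    - assert (phi C x <= p + e').
      { replace (p + e') with (phi C y0) by (unfold y0; apply invr; apply Hi; lra).
        apply ple; try apply Hi; lra. }
      rewrite HW1 by lra. apply invl; apply Hi; lra.
    - assert (q - e' <= phi C x).
      { replace (q - e') with (phi C y1) by (unfold y1; apply invr; apply Hi; lra).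
        apply ple; try apply Hi; lra. }
      rewrite HW2 by lra. apply invl; apply Hi; lra. }
  assert (HUp : phi U p = p) by (apply wfix; auto).
  assert (HUq : phi U q = q) by (apply wfix; auto).
  assert (SU : supp_in G phi U p q y0 y1).
  { split; auto. split; auto. split.
    - intros x Hx [Ho|Ho]; apply HUfix; auto; lra.
    - intros x Hx. rewrite <- (HUfix y0 Hy0 (or_introl (Rle_refl _))) at 1.
      rewrite <- (HUfix y1 Hy1 (or_intror (Rle_refl _))) at 1.
      split; apply ple; try apply Hi; lra. }
  set (x1 := hd d0 W'). set (xn := last W' d0).
  destruct (lamb_ex x1 xn) as [lam Hlam]. unfold lamb_ok in Hlam. apply andb_true_iff in Hlam.
  destruct Hlam as [Hl1 Hl2]. apply okb_okj in Hl1. apply okb_okj in Hl2.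
  set (y0' := phi (gletter G a b lam) y0).
  assert (Hy0' : p < y0' < q) by (apply letter_pres; auto).
  destruct (choose_sign (negb (fst lam)) y0' (Hi y0' ltac:(lra))) as [sl Hsl].
  set (ell := (negb (fst lam), sl)).
  destruct (choose_sign_germ (fst lam) q ltac:(lra) HFq) as [sl' [e2 [He2 Hsl']]].
  set (ell' := (fst lam, sl')).
  destruct (rho_ex x1 xn ell') as [rho Hrho]. unfold rho_ok in Hrho.
  repeat rewrite andb_true_iff in Hrho. destruct Hrho as [[Hr1 Hr2] Hr3].
  apply okb_okj in Hr1. apply okb_okj in Hr2. apply okb_okj in Hr3.
  set (T := Rmax (q - e2) (phi (ginv G (gletter G a b rho)) y1)).
  assert (HT : T < q).
  { unfold T. apply Rmax_lub_lt. lra.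
    rewrite <- gletter_linv. apply (letter_pres (linv rho) p q y1); auto. }
  destruct (orbit G phi HPL Hinj Hmul a b p q y0' T Hc Hy0' HT) as [k [Hrk Hk]].
  destruct (split3 (linv ell') (linv ell) k) as [i [k2 [j [Hke [Hk2h [Hk2l [Hi0 Hj0]]]]]]].
  set (mi := S (length k - i)). set (mj := S (length k - j)). set (M := S (length k)).
  assert (HMi : M = (mi + i)%nat). { unfold M, mi. simpl. rewrite Nat.sub_add; auto. }
  assert (HMj : M = (j + mj)%nat). { unfold M, mj. rewrite Nat.add_succ_r, Nat.add_comm, Nat.sub_add; auto. }
  set (z := rho :: (repeat ell' mi ++ (k2 ++ (repeat ell mj ++ [lam])))).
  assert (Hrk2 : reduced k2).
  { rewrite Hke in Hrk. apply reduced_app_r in Hrk. apply reduced_app_l in Hrk. auto. }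
  assert (Hdiff : fst ell' <> fst ell) by (unfold ell, ell'; simpl; destruct (fst lam); discriminate).
  assert (R4 : reduced (repeat ell mj ++ [lam])).
  { apply reduced_app. apply rep_red. simpl; auto. intros _ _. unfold mj. rewrite last_rep. simpl.
    apply okj_difftype. unfold ell; simpl. destruct (fst lam); discriminate. }
  assert (R3 : reduced (k2 ++ (repeat ell mj ++ [lam]))).
  { apply reduced_app; auto. intros Hne _. unfold mj. simpl. apply okj_sym, okj_of_neq.
    intro E. apply (Hk2l Hne). exact E. }
  assert (R2 : reduced (repeat ell' mi ++ (k2 ++ (repeat ell mj ++ [lam])))).
  { apply reduced_app; auto. apply rep_red. intros _ _. unfold mi. rewrite last_rep.
    destruct k2 as [|m k2'].
    - simpl. apply okj_difftype; auto.
    - simpl. apply okj_of_neq. apply Hk2h. discriminate. }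
  assert (Hrz : reduced z).
  { unfold z. change (reduced ([rho] ++ (repeat ell' mi ++ (k2 ++ (repeat ell mj ++ [lam]))))).
    apply reduced_app; [simpl; auto | auto | ]. intros _ _. unfold mi. simpl. auto. }
  assert (Hzh : hd d0 z = rho) by reflexivity.
  assert (Hzl : last z d0 = lam).
  { unfold z. rewrite app_comm_cons, !app_assoc. apply last_last. }
  assert (Hg : goodz W' z).
  { unfold goodz. rewrite Hzh, Hzl. fold x1 xn. repeat split; auto; discriminate. }
  set (Z := ev z).
  assert (HZv : Z = gmul G (gletter G a b rho) (gmul G (ev (repeat ell' M)) (gmul G (ev k)
                    (gmul G (ev (repeat ell M)) (gletter G a b lam))))).
  { unfold Z, z. rewrite Hke.
    replace (ev (repeat ell' M)) with (gmul G (ev (repeat ell' mi)) (ev (repeat ell' i)))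
      by (rewrite HMi, (ev_rep_add G phi Hinj a b); auto).
    replace (ev (repeat ell M)) with (gmul G (ev (repeat ell j)) (ev (repeat ell mj)))
      by (rewrite HMj, (ev_rep_add G phi Hinj a b); auto).
    change (ev (rho :: ?X)) with (gmul G (gletter G a b rho) (ev X)).
    rewrite !geval_app. change (ev [lam]) with (gmul G (gletter G a b lam) (gone G)). rewrite g_mul1r.
    pose proof (ev_rep_cancel G phi Hinj a b ell' i) as E1. rewrite geval_app in E1.
    pose proof (ev_rep_cancel G phi Hinj a b (linv ell) j) as E2. rewrite linv_linv, geval_app in E2.
    f_equal. rewrite <- !gmulA. f_equal.
    unfold L in *.     rewrite (gmulA G (ev (repeat ell' i))), E1, gmul1. f_equal.
    rewrite gmulA. rewrite E2, gmul1. reflexivity. }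
  assert (HZy0 : y1 < phi Z y0).
  { assert (Hin0 : in01 y0) by (apply Hi; lra).
    rewrite HZv. rewrite !Hmul by (repeat (first [assumption | apply pin])).
    fold y0'.
    set (Y := phi (ev (repeat ell M)) y0').
    assert (HY : y0' <= Y) by (apply (rep_ge G phi HPL Hmul a b); auto; apply Hi; lra).
    assert (HYr : p < Y < q) by (apply wpres; auto).
    assert (Hk' : phi (ev k) y0' <= phi (ev k) Y) by (apply ple; try apply Hi; lra).
    set (y2 := phi (ev k) Y).
    assert (Hy2 : p < y2 < q) by (apply wpres; auto).
    assert (HT1 : q - e2 <= T) by (unfold T; apply Rmax_l).
    assert (HT2 : phi (ginv G (gletter G a b rho)) y1 <= T) by (unfold T; apply Rmax_r).
    assert (Hy2' : y2 <= phi (ev (repeat ell' M)) y2).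
    { apply (rep_ge G phi HPL Hmul a b); auto. apply Hi; lra. apply Hsl'. unfold y2 in *. lra. }
    assert (Hv : phi (ginv G (gletter G a b rho)) y1 < phi (ev (repeat ell' M)) y2) by (unfold y2 in *; lra).
    apply (plt (gletter G a b rho)) in Hv; try (apply pin; apply Hi; lra).
    rewrite invr in Hv by (apply Hi; lra). exact Hv. }
  set (Yw := z ++ W' ++ winv z).
  assert (HYw : ev Yw = gmul G Z (gmul G U (ginv G Z))).
  { unfold Yw. rewrite !geval_app, geval_winv. reflexivity. }
  destruct (goodz_E W' z Hg v4 ltac:(discriminate) ltac:(simpl; unfold okj; simpl; intuition congruence))
    as [HW2ne HW2r].
  exists (E W' z false v4). split; auto. split; auto.
  assert (HW2v : ev (E W' z false v4) = comm G U (ev Yw)).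
  { rewrite (E_val W' z G a b v4 false). rewrite HYw. simpl. rewrite g_mul1r. reflexivity. }
  rewrite HW2v. split; [|split].
  - intros r Hr. apply comm_locid; auto; try apply Hr; apply wfix; auto.
  - intros x Hx. rewrite HYw.
    assert (HZp : phi Z p = p) by (apply wfix; auto).
    assert (HZq : phi Z q = q) by (apply wfix; auto).
    pose proof (supp_in_conj G phi HPL Hmul U Z p q y0 y1 Hp0 ltac:(lra) Hy01 ltac:(lra) Hq1 HZp HZq SU) as SY.
    assert (HZy1 : phi Z y1 < q) by (apply (wpres z p q y1); auto).
    assert (HZ01 : phi Z y0 <= phi Z y1) by (apply ple; try apply Hi; lra).
    apply (comm_disj G phi HPL Hmul U _ p q y0 y1 (phi Z y0) (phi Z y1)); auto; lra.
  - intros p' q' Hc' HWid x Hx.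
    assert (HUid : forall x, p' < x < q' -> phi U x = x).
    { intros y Hy. pose proof (cin p' q' y Hc' Hy). rewrite HU by auto.
      rewrite HWid by (apply HCpres; auto). apply invl; auto. }
    apply (comm_id U (ev Yw) p' q'); auto.
    intros y Hy. rewrite HYw. apply (conj_id U Z p' q'); auto; apply wfix; apply Hc'.
Qed.

End PS.

Open Scope R_scope.

Lemma P_case : forall G, iso_to_P G -> ~ has_nonab_free_subgroup G.
Proof.
  intros G [phi [HPL [_ [Hinj Hmul]]]] [a [b Hf]].
  pose proof (HPL a) as [_ [_ [_ [_ [nf [xf [Xf0 [Xfn [Xfinc Xflin]]]]]]]]].
  pose proof (HPL b) as [_ [_ [_ [_ [ng [xg [Xg0 [Xgn [Xginc Xglin]]]]]]]]].
  set (code := fun (p : R) (c : nat * nat) => (fst c < nf)%nat /\ (snd c < ng)%nat /\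
     xf (fst c) <= p < xf (S (fst c)) /\ xg (snd c) <= p < xg (S (snd c))).
  assert (Hinjc : forall p q p' q' c, Comp G phi a b p q -> Comp G phi a b p' q' -> code p c -> code p' c -> p = p').
  { assert (K : forall p q p' q' c, Comp G phi a b p q -> Comp G phi a b p' q' -> code p c -> code p' c -> p < p' -> False).
    { intros p q p' q' [i j] Hc Hc' [Hi [Hj [Hpi Hpj]]] [_ [_ [Hpi' Hpj']]] Hlt. simpl in *.
      pose proof Hc as [Hpq [HFp [HFq Hno]]].
      pose proof Hc' as [_ [HFp' _]].
      assert (Hqp' : q <= p').
      { destruct (Rle_or_lt q p'); auto. exfalso. apply (Hno p'); auto. }
      set (m := (p + q) / 2).
      apply (Hno m). unfold m; lra.
      destruct (Xflin i Hi) as [cf [df Hf']]. destruct (Xglin j Hj) as [cg [dg Hg']].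
      split. destruct HFp as [[? ?] _], HFq as [[? ?] _]. unfold in01, m; lra.
      split.
      - apply (lin_two_fix (phi a) cf df (xf i) (xf (S i)) p q m); auto; try lra; try apply HFp; try apply HFq; try (unfold m; lra).
      - apply (lin_two_fix (phi b) cg dg (xg j) (xg (S j)) p q m); auto; try lra; try apply HFp; try apply HFq; try (unfold m; lra). }
    intros p q p' q' c Hc Hc' H1 H2. destruct (Rtotal_order p p') as [L|[E|L]]; auto.
    exfalso; exact (K p q p' q' c Hc Hc' H1 H2 L). exfalso; exact (K p' q' p q c Hc' Hc H2 H1 L). }
  assert (Hqu : forall p q q', Comp G phi a b p q -> Comp G phi a b p q' -> q = q').
  { intros p q q' [H1 [_ [HFq Hno]]] [H1' [_ [HFq' Hno']]].
    destruct (Rtotal_order q q') as [L|[E|L]]; auto.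
    exfalso; apply (Hno' q); auto. exfalso; apply (Hno q'); auto. }
  assert (Claim : forall Lc W, W <> [] -> reduced W -> CF G phi a b (geval G a b W) ->
    (forall x p q, in01 x -> phi (geval G a b W) x <> x -> Comp G phi a b p q -> p < x < q ->
       exists c, In c Lc /\ code p c) -> False).
  { induction Lc as [|c Lc IH]; intros W HW HrW HCF Hbad.
    - apply (Hf W HW HrW). apply Hinj. intros x Hx. rewrite (Ph_one G phi HPL Hmul) by auto.
      apply NNPP. intro Hn.
      assert (HnF : ~ Fx G phi a b x) by (intro HF; apply Hn; apply (word_fix G phi HPL Hmul); auto).
      destruct (comp_exists G phi HPL a b x Hx HnF) as [p [q [Hc Hpx]]].
      destruct (Hbad x p q Hx Hn Hc Hpx) as [c [[] _]].
    - destruct (classic (exists x p q, in01 x /\ phi (geval G a b W) x <> x /\ Comp G phi a b p q /\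
          p < x < q /\ code p c)) as [[x0 [p [q [Hx0 [Hn0 [Hc [Hpx Hcode]]]]]]]|Hno].
      + destruct (stage G phi HPL Hinj Hmul a b W p q HW HrW HCF Hc) as [W2 [HW2 [HrW2 [HCF2 [Hid Hpres]]]]].
        apply (IH W2 HW2 HrW2 HCF2). intros x p' q' Hx Hn Hc' Hpx'.
        assert (Hbw : exists x', p' < x' < q' /\ phi (geval G a b W) x' <> x').
        { apply NNPP. intro Hnn. apply Hn. apply (Hpres p' q' Hc'); auto.
          intros y Hy. apply NNPP. intro Hy'. apply Hnn. exists y; auto. }
        destruct Hbw as [x' [Hx' Hn']].
        destruct (Hbad x' p' q' (comp_in G phi a b p' q' x' Hc' Hx') Hn' Hc' Hx') as [c' [Hin Hcd]].
        destruct Hin as [<-|Hin]; [|exists c'; auto].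
        exfalso. assert (p = p') by (eapply Hinjc; eauto). subst p'.
        assert (q = q') by (eapply Hqu; eauto). subst q'.
        apply Hn. apply Hid; auto.
      + apply (IH W HW HrW HCF). intros x p q Hx Hn Hc Hpx.
        destruct (Hbad x p q Hx Hn Hc Hpx) as [c' [Hin Hcd]].
        destruct Hin as [<-|Hin]; [|exists c'; auto].
        exfalso. apply Hno. exists x, p, q. auto. }
  apply (Claim (list_prod (seq 0 nf) (seq 0 ng)) v4).
  - discriminate.
  - simpl. unfold okj; simpl. intuition congruence.
  - intros r Hr. replace (geval G a b v4) with (comm G a b).
    apply (comm_locid G phi HPL Hmul); apply Hr.
    unfold comm, v4. simpl. rewrite g_mul1r. reflexivity.
  - intros x p q Hx Hn Hc Hpx.
    pose proof Hc as [Hpq [[[Hp0 Hp1] _] [[[Hq0 Hq1] _] _]]].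
    destruct (find_piece_r xf nf p ltac:(lra) ltac:(lra)) as [i [Hi Hpi]].
    destruct (find_piece_r xg ng p ltac:(lra) ltac:(lra)) as [j [Hj Hpj]].
    exists (i, j). split.
    + apply in_prod; apply in_seq; lia.
    + unfold code; simpl; auto.
Qed.

Close Scope R_scope.

Theorem corollary4p8 : forall G : Grp, inC G -> ~ has_nonab_free_subgroup G.
Proof.
  intros G HC. induction HC.
  - apply ns_case; auto.
  - apply P_case; auto.
  - eapply sub_case; eauto.
  - eapply image_case; eauto.
  - eapply ext_case; eauto.
  - eapply dir_case; eauto.
Qed.
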